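(* For every non-trivial geometric lattice $\mathcal L$, the product $\bullet$ on $\mathcal{MD}(\mathcal L)$ is associative, graded commutative (i.e. $\Gamma_1\bullet\Gamma_2=(-1)^{\deg\Gamma_1\deg\Gamma_2}\Gamma_2\bullet\Gamma_1$), preserves degrees (degrees add), and has unit the class of the empty modular diagram $(\mathcal L,\mathrm{id}_{\mathcal L},\emptyset)$.
   Context: Geometric lattices. A geometric lattice is a finite lattice $\mathcal L$ (bottom $\hat0$, top $\hat1$, join $\vee$, meet $\wedge$) which is ranked (all maximal chains from $\hat0$ to a given element $F$ have the same length $\mathrm{rk}(F)$), atomic (every element is a join of atoms, i.e. rank-one elements) and semimodular ($\mathrm{rk}(F_1\wedge F_2)+\mathrm{rk}(F_1\vee F_2)\le\mathrm{rk}(F_1)+\mathrm{rk}(F_2)$). Elements are called flats, $\mathrm{At}(\mathcal L)$ denotes the set of atoms, and $\mathcal L$ is non-trivial if it has at least two elements. For a finite family $J$ of atoms, $\bigvee J$ is its join ($\bigvee\emptyset=\hat0$). Every interval $[F_1,F_2]$ is a geometric lattice, and products of geometric lattices are geometric lattices. A flat $F$ is modular if $\mathrm{rk}(F\wedge F')+\mathrm{rk}(F\vee F')=\mathrm{rk}(F)+\mathrm{rk}(F')$ for every flat $F'$. An embedding $\varphi:\mathcal L_1\to\mathcal L_2$ of geometric lattices is an injective order-preserving map preserving joins and sending atoms to atoms. Modular diagrams. Let $\mathcal L$ be a non-trivial geometric lattice. A modular extension of $\mathcal L$ is a pair $(\mathcal E,\iota)$ where $\mathcal E$ is a geometric lattice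 and $\iota:\mathcal L\to\mathcal E$ is an embedding whose image is an interval $[\hat0,F_\iota]$ with $F_\iota$ a modular flat of $\mathcal E$. A modular diagram of $\mathcal L$ is a triple $\Gamma=(\mathcal E,\iota,J)$ with $(\mathcal E,\iota)$ a modular extension and $J=(H_1,\dots,H_n)$ a finite word in the alphabet $\mathrm{At}(\mathcal E)$; its degree is $\deg\Gamma=n-2\big(\mathrm{rk}\bigvee J-\mathrm{rk}((\bigvee J)\wedge F_\iota)\big)$. $\mathcal{MD}(\mathcal L)$ is the $\mathbb Z$-graded $\mathbb Q$-vector space spanned by all modular diagrams, quotiented by the relations: (R1) $(\mathcal E,\iota,J)\sim-(\mathcal E,\iota,J')$ if $J'$ is obtained from $J$ by transposing two letters; (R2) $(\mathcal E,\iota,J)\sim(\mathcal E',\iota',J')$ if there is an embedding $\varphi:\mathcal E\to\mathcal E'$ with $\mathrm{rk}(\mathcal E)=\mathrm{rk}(\mathcal E')$, $\iota'=\varphi\circ\iota$ and $J'=\varphi(J)$ letterwise; (R3) $(\mathcal E,\iota,J)\sim0$ if $F_\iota\vee\bigvee J<\hat1_{\mathcal E}$; (R4) $(\mathcal E,\iota,J)\sim0$ if $\mathcal E\cong\mathcal E_1\times\mathcal E_2$ with $\mathcal E_1,\mathcal E_2$ non-trivial and $F_\iota\in\mathcal E_1\times\{\hat0\}$; (R5) $(\mathcal E,\iota,J)\sim0$ if there is a modular flat $F\ge F_\iota$ of $\mathcal E$ such that exactly two letters of $J$ are not below $F$. Product. For modular extensions $(\mathcal E_1,\iota_1),(\mathcal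 E_2,\iota_2)$ of $\mathcal L$, the pushout $\mathcal E_1\cup_{\mathcal L}\mathcal E_2$ is the subposet of $\mathcal E_1\times\mathcal E_2$ of pairs $(F_1,F_2)$ with $\iota_1^{-1}(F_1\wedge F_{\iota_1})=\iota_2^{-1}(F_2\wedge F_{\iota_2})$; it is a geometric lattice, and $\iota_{12}(A)=(\iota_1(A),\iota_2(A))$ makes it a modular extension of $\mathcal L$. Its atoms are the $(H,\hat0)$ with $H\in\mathrm{At}(\mathcal E_1)\setminus\iota_1(\mathcal L)$, the $(\hat0,H)$ with $H\in\mathrm{At}(\mathcal E_2)\setminus\iota_2(\mathcal L)$, and the $(\iota_1(H),\iota_2(H))$ with $H\in\mathrm{At}(\mathcal L)$, which identifies $\mathrm{At}(\mathcal E_1\cup_{\mathcal L}\mathcal E_2)$ with $\mathrm{At}(\mathcal E_1)\cup_{\mathrm{At}(\mathcal L)}\mathrm{At}(\mathcal E_2)$. The product is $(\mathcal E_1,\iota_1,J_1)\bullet(\mathcal E_2,\iota_2,J_2)=(\mathcal E_1\cup_{\mathcal L}\mathcal E_2,\iota_{12},J_1J_2)$ (concatenated word); it is well defined on $\mathcal{MD}(\mathcal L)$. *)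

(* Defs.v *)
From HB Require Import structures.
From mathcomp Require Import all_boot all_order all_algebra.
Set Implicit Arguments. Unset Strict Implicit. Unset Printing Implicit Defensive.
Import GRing.Theory Num.Theory.

(* All lattice operations are *derived* from [le].                           *)
Record rawLat := RawLat { car : finType; le : rel car; bot : car }.

Definition lt (T : rawLat) (x y : car T) := (x != y) && le x y.

Definition is_ub (T : rawLat) (S : {set car T}) (z : car T) :=
  [forall s, (s \in S) ==> le s z].
Definition is_lub (T : rawLat) (S : {set car T}) (z : car T) :=
  is_ub S z && [forall w, is_ub S w ==> le z w].
Definition is_lb (T : rawLat) (S : {set car T}) (z : car T) :=
  [forall s, (s \in S) ==> le z s].
Definition is_glb (T : rawLat) (S : {set car T}) (z : car T) :=
  is_lb S z && [forall w, is_lb S w ==> le w z].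

Definition lub (T : rawLat) (S : {set car T}) : car T :=
  odflt (bot T) [pick z | is_lub S z].
Definition glb (T : rawLat) (S : {set car T}) : car T :=
  odflt (bot T) [pick z | is_glb S z].
Definition join (T : rawLat) (x y : car T) := lub [set x; y].
Definition meet (T : rawLat) (x y : car T) := glb [set x; y].
Definition bigjoin (T : rawLat) (J : seq (car T)) := lub [set x in J].
Definition top (T : rawLat) := lub [set: car T].

Definition cover (T : rawLat) (x y : car T) :=
  lt x y && [forall z, ~~ (lt x z && lt z y)].
Definition satchain (T : rawLat) (x : car T) (s : seq (car T)) (y : car T) :=
  path (@cover T) x s && (last x s == y).

Definition rk (T : rawLat) (F : car T) : nat :=
  \max_(n < #|car T|.+1 | [exists t : n.-tuple (car T), satchain (bot T) t F]) n.

Definition atom (T : rawLat) (a : car T) := cover (bot T) a.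

Definition is_lattice (T : rawLat) :=
  [/\ reflexive (@le T), antisymmetric (@le T), transitive (@le T) &
      (forall x : car T, le (bot T) x)] /\
  (forall x y : car T, exists z, is_lub [set x; y] z) /\
  (forall x y : car T, exists z, is_glb [set x; y] z).

Definition ranked (T : rawLat) :=
  forall (F : car T) (s1 s2 : seq (car T)),
    satchain (bot T) s1 F -> satchain (bot T) s2 F -> size s1 = size s2.

Definition atomic (T : rawLat) :=
  forall F : car T, exists A : {set car T},
    (forall a, a \in A -> atom a) /\ is_lub A F.

Definition semimodular (T : rawLat) :=
  forall F1 F2 : car T, rk (meet F1 F2) + rk (join F1 F2) <= rk F1 + rk F2.

Definition geometric (T : rawLat) :=
  [/\ is_lattice T, ranked T, atomic T & semimodular T].

Definition nontrivial (T : rawLat) := 1 < #|car T|.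

Definition modular_flat (T : rawLat) (F : car T) :=
  forall F' : car T, rk (meet F F') + rk (join F F') = rk F + rk F'.

Definition embedding (T1 T2 : rawLat) (phi : car T1 -> car T2) :=
  [/\ injective phi,
      (forall x y, le x y -> le (phi x) (phi y)),
      (forall x y, phi (join x y) = join (phi x) (phi y)) &
      (forall a, atom a -> atom (phi a))].

Definition modext (L E : rawLat) (iota : car L -> car E) :=
  [/\ geometric E, embedding iota,
      (forall x : car E, (exists A, iota A = x) <-> le x (iota (top L))) &
      modular_flat (iota (top L))].

Record diagram (L : rawLat) := Diagram {
  dE : rawLat; diota : car L -> car dE; dword : seq (car dE) }.
Arguments Diagram {L} dE diota dword.

Definition Fiota (L : rawLat) (G : diagram L) : car (dE G) := diota G (top L).

Definition valid (L : rawLat) (G : diagram L) :=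
  modext (diota G) /\ all (@atom (dE G)) (dword G).

Definition deg (L : rawLat) (G : diagram L) : int :=
  ((size (dword G))%:Z -
   2 * ((rk (bigjoin (dword G)))%:Z - (rk (meet (bigjoin (dword G)) (Fiota G)))%:Z))%R.

Definition swapw (T : Type) (x0 : T) (s : seq T) (i j : nat) :=
  set_nth x0 (set_nth x0 s i (nth x0 s j)) j (nth x0 s i).
Definition dswap (L : rawLat) (G : diagram L) (i j : nat) : diagram L :=
  Diagram (dE G) (diota G) (swapw (bot (dE G)) (dword G) i j).

Definition prodLat (T1 T2 : rawLat) : rawLat :=
  RawLat (fun p q : (car T1 * car T2)%type => le p.1 q.1 && le p.2 q.2)
         (bot T1, bot T2).

Definition lat_iso (T1 T2 : rawLat) (psi : car T1 -> car T2) :=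
  bijective psi /\ forall x y, le x y = le (psi x) (psi y).

Definition rkL (T : rawLat) := rk (top T).

(* Relations R1--R5, encoded through the universal property of the quotient *)
Definition respects (L : rawLat) (V : lmodType rat) (f : diagram L -> V) :=
  [/\
      (forall (G : diagram L) (i j : nat), valid G ->
         i < size (dword G) -> j < size (dword G) -> i != j ->
         f G = (- f (dswap G i j))%R),
      (forall (G G' : diagram L) (phi : car (dE G) -> car (dE G')),
         valid G -> valid G' -> embedding phi -> rkL (dE G) = rkL (dE G') ->
         (forall A, diota G' A = phi (diota G A)) ->
         dword G' = map phi (dword G) -> f G = f G'),
      (forall G : diagram L, valid G ->
         lt (join (Fiota G) (bigjoin (dword G))) (top (dE G)) -> f G = 0%R),
      (forall G : diagram L, valid G ->
         (exists (E1 E2 : rawLat) (psi : car (dE G) -> car (prodLat E1 E2)),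
            [/\ geometric E1, geometric E2, nontrivial E1 & nontrivial E2] /\
            lat_iso psi /\ (psi (Fiota G)).2 = bot E2) ->
         f G = 0%R) &
      (forall G : diagram L, valid G ->
         (exists F : car (dE G), [/\ modular_flat F, le (Fiota G) F &
            count (fun H => ~~ le H F) (dword G) = 2]) ->
         f G = 0%R)].

Definition po_cond (L E1 E2 : rawLat) (i1 : car L -> car E1) (i2 : car L -> car E2)
  (p : (car E1 * car E2)%type) : bool :=
  [exists A, (i1 A == meet p.1 (i1 (top L))) && (i2 A == meet p.2 (i2 (top L)))]
  || (p == (bot E1, bot E2)).
(* The disjunct [p == (bot,bot)] is redundant for modular extensions (it only
   provides a default element for raw data). *)

Lemma po_cond_bot (L E1 E2 : rawLat) (i1 : car L -> car E1) (i2 : car L -> car E2) :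
  po_cond i1 i2 (bot E1, bot E2).
Proof. by rewrite /po_cond eqxx orbT. Qed.

Definition po_bot (L E1 E2 : rawLat) (i1 : car L -> car E1) (i2 : car L -> car E2)
  : {p : (car E1 * car E2)%type | po_cond i1 i2 p} :=
  exist _ (bot E1, bot E2) (po_cond_bot i1 i2).

Definition poLat (L E1 E2 : rawLat) (i1 : car L -> car E1) (i2 : car L -> car E2)
  : rawLat :=
  @RawLat {p : (car E1 * car E2)%type | po_cond i1 i2 p}
    (fun p q => le (val p).1 (val q).1 && le (val p).2 (val q).2)
    (po_bot i1 i2).

Definition po_iota (L E1 E2 : rawLat) (i1 : car L -> car E1) (i2 : car L -> car E2)
  (A : car L) : car (poLat i1 i2) :=
  insubd (po_bot i1 i2) (i1 A, i2 A).

Definition po_inj1 (L E1 E2 : rawLat) (i1 : car L -> car E1) (i2 : car L -> car E2)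
  (H : car E1) : car (poLat i1 i2) :=
  insubd (po_bot i1 i2)
    (match [pick A | i1 A == H] with Some A => (H, i2 A) | None => (H, bot E2) end).
Definition po_inj2 (L E1 E2 : rawLat) (i1 : car L -> car E1) (i2 : car L -> car E2)
  (H : car E2) : car (poLat i1 i2) :=
  insubd (po_bot i1 i2)
    (match [pick A | i2 A == H] with Some A => (i1 A, H) | None => (bot E1, H) end).

Definition dmul (L : rawLat) (G1 G2 : diagram L) : diagram L :=
  Diagram (poLat (diota G1) (diota G2)) (po_iota (diota G1) (diota G2))
    (map (po_inj1 (diota G1) (diota G2)) (dword G1) ++
     map (po_inj2 (diota G1) (diota G2)) (dword G2)).

Definition dunit (L : rawLat) : diagram L := Diagram L id [::].

(* Main.v *)
Require Import Defs.
From HB Require Import structures.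
From mathcomp Require Import all_boot all_order all_algebra.
From mathcomp Require Import zify.
Set Implicit Arguments. Unset Strict Implicit. Unset Printing Implicit Defensive.

Section Lat.
Variable T : rawLat.
Hypothesis HT : is_lattice T.
Implicit Types x y z w : car T.

Lemma leR x : le x x. Proof. by case: HT => [[]]. Qed.
Lemma leT x y z : le x y -> le y z -> le x z.
Proof. by case: HT => [[_ _ t _] _] ; apply: t. Qed.
Lemma leA x y : le x y -> le y x -> x = y.
Proof. by case: HT => [[_ a _ _] _] h1 h2; apply: a; rewrite h1 h2. Qed.
Lemma le0 x : le (bot T) x. Proof. by case: HT => [[]]. Qed.

Lemma is_ubP (S : {set car T}) z : reflect (forall s, s \in S -> le s z) (is_ub S z).
Proof. exact: forall_inP. Qed.
Lemma is_lbP (S : {set car T}) z : reflect (forall s, s \in S -> le z s) (is_lb S z).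
Proof. exact: forall_inP. Qed.

Lemma is_lubP (S : {set car T}) z :
  reflect ((forall s, s \in S -> le s z) /\ (forall w, (forall s, s \in S -> le s w) -> le z w))
          (is_lub S z).
Proof.
apply: (iffP andP) => [[/is_ubP h /forallP h2]|[h1 h2]]; split => //.
  by move=> w /is_ubP hw; move: (h2 w); rewrite hw.
  by apply/is_ubP.
by apply/forallP => w; apply/implyP => /is_ubP; apply: h2.
Qed.
Lemma is_glbP (S : {set car T}) z :
  reflect ((forall s, s \in S -> le z s) /\ (forall w, (forall s, s \in S -> le w s) -> le w z))
          (is_glb S z).
Proof.
apply: (iffP andP) => [[/is_lbP h /forallP h2]|[h1 h2]]; split => //.
  by move=> w /is_lbP hw; move: (h2 w); rewrite hw.
  by apply/is_lbP.
by apply/forallP => w; apply/implyP => /is_lbP; apply: h2.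
Qed.

Lemma lub_uniq (S : {set car T}) a b : is_lub S a -> is_lub S b -> a = b.
Proof.
move=> /is_lubP [ha1 ha2] /is_lubP [hb1 hb2].
by apply: leA; [apply: ha2 | apply: hb2].
Qed.
Lemma glb_uniq (S : {set car T}) a b : is_glb S a -> is_glb S b -> a = b.
Proof.
move=> /is_glbP [ha1 ha2] /is_glbP [hb1 hb2].
by apply: leA; [apply: hb2 | apply: ha2].
Qed.

Lemma lubE (S : {set car T}) z : is_lub S z -> lub S = z.
Proof.
move=> h; rewrite /lub; case: pickP => [z' /= hz'|/(_ z)]; last by rewrite h.
exact: lub_uniq hz' h.
Qed.
Lemma glbE (S : {set car T}) z : is_glb S z -> glb S = z.
Proof.
move=> h; rewrite /glb; case: pickP => [z' /= hz'|/(_ z)]; last by rewrite h.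
exact: glb_uniq hz' h.
Qed.

Lemma join_spec x y : is_lub [set x; y] (join x y).
Proof.
case: HT => _ [hj _]; case: (hj x y) => z hz.
by rewrite /join (lubE hz).
Qed.
Lemma meet_spec x y : is_glb [set x; y] (meet x y).
Proof.
case: HT => _ [_ hm]; case: (hm x y) => z hz.
by rewrite /meet (glbE hz).
Qed.

Lemma leJl x y : le x (join x y).
Proof. by case/is_lubP: (join_spec x y) => h _; apply: h; rewrite !inE eqxx. Qed.
Lemma leJr x y : le y (join x y).
Proof. by case/is_lubP: (join_spec x y) => h _; apply: h; rewrite !inE eqxx orbT. Qed.
Lemma leJ x y z : le x z -> le y z -> le (join x y) z.
Proof.
move=> hx hy; case/is_lubP: (join_spec x y) => _ h; apply: h => s.
by rewrite !inE => /orP [] /eqP ->.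
Qed.
Lemma leMl x y : le (meet x y) x.
Proof. by case/is_glbP: (meet_spec x y) => h _; apply: h; rewrite !inE eqxx. Qed.
Lemma leMr x y : le (meet x y) y.
Proof. by case/is_glbP: (meet_spec x y) => h _; apply: h; rewrite !inE eqxx orbT. Qed.
Lemma leM x y z : le z x -> le z y -> le z (meet x y).
Proof.
move=> hx hy; case/is_glbP: (meet_spec x y) => _ h; apply: h => s.
by rewrite !inE => /orP [] /eqP ->.
Qed.

Lemma joinE x y z : le x z -> le y z -> (forall w, le x w -> le y w -> le z w) -> join x y = z.
Proof. move=> h1 h2 h3; apply: leA; [exact: leJ | exact: h3 (leJl _ _) (leJr _ _)]. Qed.
Lemma meetE x y z : le z x -> le z y -> (forall w, le w x -> le w y -> le w z) -> meet x y = z.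
Proof. move=> h1 h2 h3; apply: leA; [exact: h3 (leMl _ _) (leMr _ _) | exact: leM]. Qed.

Lemma join_idr x y : le x y -> join x y = y.
Proof. move=> h; apply: joinE => [||w h1 h2] //; exact: leR. Qed.
Lemma join_idl x y : le y x -> join x y = x.
Proof. move=> h; apply: joinE => [||w h1 h2] //; exact: leR. Qed.
Lemma meet_idl x y : le x y -> meet x y = x.
Proof. move=> h; apply: meetE => [||w h1 h2] //; exact: leR. Qed.
Lemma meet_idr x y : le y x -> meet x y = y.
Proof. move=> h; apply: meetE => [||w h1 h2] //; exact: leR. Qed.
Lemma joinC x y : join x y = join y x.
Proof. by apply: joinE; [apply: leJr | apply: leJl | move=> w h1 h2; apply: leJ]. Qed.
Lemma meetC x y : meet x y = meet y x.
Proof. by apply: meetE; [apply: leMr | apply: leMl | move=> w h1 h2; apply: leM]. Qed.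
Lemma le_join x y : le x y = (join x y == y).
Proof.
apply/idP/eqP => [/join_idr //|<-]; exact: leJl.
Qed.
Lemma leJ2 x y x' y' : le x x' -> le y y' -> le (join x y) (join x' y').
Proof. move=> h1 h2; apply: leJ; [apply: leT h1 (leJl _ _)|apply: leT h2 (leJr _ _)]. Qed.
Lemma leM2 x y x' y' : le x x' -> le y y' -> le (meet x y) (meet x' y').
Proof. move=> h1 h2; apply: leM; [apply: leT (leMl _ _) h1|apply: leT (leMr _ _) h2]. Qed.
Lemma joinA x y z : join x (join y z) = join (join x y) z.
Proof.
apply: leA; apply: leJ.
- exact: leT (leJl x y) (leJl _ z).
- apply: leJ; [exact: leT (leJr x y) (leJl _ z)|exact: leJr].
- apply: leJ; [exact: leJl|exact: leT (leJl y z) (leJr x _)].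
- exact: leT (leJr y z) (leJr x _).
Qed.
Lemma meetA x y z : meet x (meet y z) = meet (meet x y) z.
Proof.
apply: leA; apply: leM.
- apply: leM; [exact: leMl|exact: leT (leMr x _) (leMl y z)].
- exact: leT (leMr x _) (leMr y z).
- exact: leT (leMl _ z) (leMl x y).
- apply: leM; [exact: leT (leMl _ z) (leMr x y)|exact: leMr].
Qed.
Lemma join0 x : join (bot T) x = x. Proof. exact/join_idr/le0. Qed.
Lemma join0r x : join x (bot T) = x. Proof. exact/join_idl/le0. Qed.

Lemma lub_seq (s : seq (car T)) : is_lub [set x in s] (foldr (@join T) (bot T) s).
Proof.
elim: s => [|a s IH] /=.
  apply/is_lubP; split => [x|w _]; [by rewrite inE|exact: le0].
case/is_lubP: IH => h1 h2; apply/is_lubP; split.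
  move=> x; rewrite !inE => /orP [/eqP ->|hx]; first exact: leJl.
  by apply: leT (h1 x _) (leJr _ _); rewrite inE.
move=> w hw; apply: leJ; first by apply: hw; rewrite !inE eqxx.
by apply: h2 => x hx; apply: hw; rewrite !inE; rewrite inE in hx; rewrite hx orbT.
Qed.
Lemma bigjoinE (s : seq (car T)) : bigjoin s = foldr (@join T) (bot T) s.
Proof. exact: lubE (lub_seq s). Qed.
Lemma lub_set (S : {set car T}) : is_lub S (lub S).
Proof.
have -> : S = [set x in enum S] by apply/setP => x; rewrite !inE mem_enum.
by rewrite (lubE (lub_seq _)); apply: lub_seq.
Qed.
Lemma le_top x : le x (top T).
Proof. by case/is_lubP: (lub_set [set: car T]) => h _; apply: h; rewrite inE. Qed.
Lemma bigjoin_cat (s1 s2 : seq (car T)) : bigjoin (s1 ++ s2) = join (bigjoin s1) (bigjoin s2).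
Proof.
rewrite !bigjoinE; elim: s1 => [|a s IH] /=; first by rewrite join0.
by rewrite IH joinA.
Qed.

Lemma ltW x y : lt x y -> le x y. Proof. by case/andP. Qed.
Lemma ltNeq x y : lt x y -> x != y. Proof. by case/andP. Qed.
Lemma lt_def x y : le x y -> x != y -> lt x y. Proof. by move=> h1 h2; apply/andP. Qed.
Lemma lt_trans x y z : lt x y -> lt y z -> lt x z.
Proof.
move=> /andP [n1 l1] /andP [n2 l2]; apply/andP; split; last exact: leT l1 l2.
apply/eqP => e; subst z; move/eqP: n1; apply; exact: leA l1 l2.
Qed.
Lemma lt_irr x : ~~ lt x x. Proof. by rewrite /lt eqxx. Qed.
Lemma ltxx x : lt x x = false. Proof. by rewrite /lt eqxx. Qed.
Lemma lt_le_trans x y z : lt x y -> le y z -> lt x z.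
Proof.
move=> /andP [n1 l1] l2; apply/andP; split; last exact: leT l1 l2.
apply/eqP => e; subst z; move/eqP: n1; apply; exact: leA l1 l2.
Qed.
Lemma le_lt_trans x y z : le x y -> lt y z -> lt x z.
Proof.
move=> l1 /andP [n2 l2]; apply/andP; split; last exact: leT l1 l2.
apply/eqP => e; subst z; move/eqP: n2; apply; exact: leA l2 l1.
Qed.

End Lat.

Section Chains.
Variable T : rawLat.
Hypothesis HT : is_lattice T.
Implicit Types x y z w : car T.

Lemma min_elt (D : {set car T}) z0 : z0 \in D ->
  exists2 z, z \in D & forall w, w \in D -> ~~ lt w z.
Proof.
move=> hz0.
case: (arg_minnP (fun z => #|[set w | lt w z]|) hz0) => z hz hmin.
exists z => // w hw; apply/negP => hwz.
have := hmin w hw; apply/negP; rewrite -ltnNge.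
apply: proper_card; apply/properP; split.
  apply/subsetP => v; rewrite !inE => hv. exact: (lt_trans HT hv hwz).
by exists w; rewrite !inE ?hwz // ltxx.
Qed.

Lemma chain_exists x0 y : le x0 y -> exists s, satchain x0 s y.
Proof.
suff: forall n x, #|[set w | lt x w && le w y]| <= n -> le x y -> exists s, satchain x s y.
  by move=> /(_ _ x0 (leqnn _)).
move=> n; elim: n => [|n IH] x hn hxy.
  case: (eqVneq x y) => [<-|nxy]; first by exists [::]; rewrite /satchain /= eqxx.
  move: hn; rewrite leqn0 => /eqP/cards0_eq/setP/(_ y).
  by rewrite !inE (lt_def hxy nxy) leR.
case: (eqVneq x y) => [<-|nxy]; first by exists [::]; rewrite /satchain /= eqxx.
have hy : y \in [set w | lt x w && le w y] by rewrite inE (lt_def hxy nxy) leR.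
case: (min_elt hy) => z; rewrite inE => /andP [hxz hzy] hmin.
have hcov : Defs.cover x z.
  apply/andP; split => //; apply/forallP => w; apply/negP => /andP [h1 h2].
  by move: (hmin w); rewrite inE h1 (leT HT (ltW h2) hzy) /= h2 => /(_ isT).
have hsub : #|[set w | lt z w && le w y]| < #|[set w | lt x w && le w y]|.
  apply: proper_card; apply/properP; split.
    apply/subsetP => v; rewrite !inE => /andP [h1 h2].
    by rewrite (lt_trans HT hxz h1) h2.
  by exists z; rewrite !inE ?hxz ?hzy // ltxx.
case: (IH z _ hzy) => [|s /andP [hp hl]]; first by rewrite -ltnS; apply: leq_trans hsub hn.
by exists (z :: s); rewrite /satchain /= hcov hp hl.
Qed.

Lemma cover_lt x y : Defs.cover x y -> lt x y. Proof. by case/andP. Qed.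

Lemma chain_size x s y : satchain x s y -> size s < #|car T|.
Proof.
case/andP => hp _.
have hs : sorted (@lt T) (x :: s).
  by apply: sub_path hp => a b; apply: cover_lt.
have ltT : transitive (@lt T) by move=> b a c h1 h2; exact: (lt_trans HT h1 h2).
have ltI : irreflexive (@lt T) by move=> a; exact: ltxx.
have hu : uniq (x :: s) := sorted_uniq ltT ltI hs.
by move/card_uniqP: hu => /= <-; apply: max_card.
Qed.

Lemma chain_cat x s y s' z : satchain x s y -> satchain y s' z -> satchain x (s ++ s') z.
Proof.
case/andP => h1 /eqP h2 /andP [h3 h4].
by rewrite /satchain cat_path last_cat h2 h1 h3.
Qed.

Lemma chain_le x s y : satchain x s y -> le x y.
Proof.
elim: s x => [|a s IH] x /andP [/= hp /eqP hl].
  by rewrite -hl leR.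
case/andP: hp => hc hp.
have h : le a y by apply: IH; apply/andP; split => //; apply/eqP.
exact: (leT HT (ltW (cover_lt hc)) h).
Qed.

Hypothesis Hr : ranked T.

Lemma rkE F s : satchain (bot T) s F -> rk F = size s.
Proof.
move=> hs; apply/eqP; rewrite eqn_leq; apply/andP; split.
  apply/bigmax_leqP => i /existsP [t ht].
  by rewrite -(Hr ht hs) size_tuple.
have hi : size s < #|car T|.+1 by apply: ltnW; rewrite ltnS; apply: chain_size hs.
apply: (@leq_bigmax_cond _ _ _ (Ordinal hi)) => /=.
by apply/existsP; exists (in_tuple s).
Qed.

Lemma rk0 : rk (bot T) = 0.
Proof. by rewrite (@rkE _ [::]) // /satchain /= eqxx. Qed.

Lemma rk_cover x y : Defs.cover x y -> rk y = (rk x).+1.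
Proof.
move=> hc; case: (chain_exists (le0 HT x)) => s hs.
rewrite (rkE hs) (@rkE y (rcons s y)) ?size_rcons //.
case/andP: hs => hp /eqP hl.
by rewrite /satchain rcons_path last_rcons hp hl hc eqxx.
Qed.

Lemma rk_lt x y : lt x y -> rk x < rk y.
Proof.
move=> hxy; case: (chain_exists (le0 HT x)) => s hs.
case: (chain_exists (ltW hxy)) => s' hs'.
rewrite (rkE hs) (rkE (chain_cat hs hs')) size_cat -addn1 leq_add2l.
case: s' hs' => [|a s'] //; case/andP => _ /= /eqP e.
by move: (ltNeq hxy); rewrite e eqxx.
Qed.

Lemma rk_le x y : le x y -> rk x <= rk y.
Proof.
move=> h; case: (eqVneq x y) => [->//|n].
exact/ltnW/rk_lt/lt_def.
Qed.

Lemma rk_inj x y : le x y -> rk x = rk y -> x = y.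
Proof.
move=> h e; case: (eqVneq x y) => [//|n].
by have := rk_lt (lt_def h n); rewrite e ltnn.
Qed.

Lemma rk_ge_inj x y : le x y -> rk y <= rk x -> x = y.
Proof.
move=> h e; apply: rk_inj => //; apply/eqP; rewrite eqn_leq e rk_le //.
Qed.

Lemma atom_rk (a : car T) : atom a -> rk a = 1.
Proof. by move/rk_cover; rewrite rk0. Qed.

Lemma rk_atom (a : car T) : rk a = 1 -> atom a.
Proof.
move=> h; apply/andP; split.
  apply: lt_def; first exact: le0.
  by apply/eqP => e; move: h; rewrite -e rk0.
apply/forallP => z; apply/negP => /andP [h1 h2].
by have := rk_lt h1; have := rk_lt h2; rewrite rk0 h; case: (rk z).
Qed.

End Chains.

Section Geom.
Variable T : rawLat.
Hypothesis HG : geometric T.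
Let HT : is_lattice T. Proof. by case: HG. Qed.
Let Hr : ranked T. Proof. by case: HG. Qed.
Let Ha : atomic T. Proof. by case: HG. Qed.
Let Hs : semimodular T. Proof. by case: HG. Qed.
Implicit Types x y z w : car T.

Lemma geo_lat : is_lattice T. Proof. exact: HT. Qed.
Lemma geo_ranked : ranked T. Proof. exact: Hr. Qed.

Lemma sep_atom x y : lt x y -> exists a, [/\ atom a, le a y & ~~ le a x].
Proof.
move=> hxy; case: (Ha y) => A [hA /is_lubP [h1 h2]].
case: (boolP [forall a in A, le a x]) => [/forall_inP hall|].
  by have := h2 x hall => hyx; move: (ltNeq hxy); rewrite (leA HT (ltW hxy) hyx) eqxx.
move/forall_inPn => [a ha hna]; exists a; split => //; [exact: hA|exact: h1].
Qed.

Lemma meet_atom_bot a x : atom a -> ~~ le a x -> meet x a = bot T.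
Proof.
move=> ha hna; case: (eqVneq (meet x a) (bot T)) => // ne.
case/andP: ha => _ /forallP /(_ (meet x a)); rewrite /lt eq_sym ne le0 //=.
rewrite leMr // andbT; move/negbNE => /eqP e.
by move: hna; rewrite -e leMl.
Qed.

Lemma rk_join_atom_le a x : atom a -> rk (join x a) <= (rk x).+1.
Proof.
move=> ha; case: (boolP (le a x)) => hax.
  by rewrite join_idl // leqnSn.
have := Hs x a; rewrite meet_atom_bot // rk0 // (atom_rk HT Hr ha).
by rewrite add0n addn1.
Qed.

Lemma rk_join_atom a x : atom a -> ~~ le a x -> rk (join x a) = (rk x).+1.
Proof.
move=> ha hna; apply/eqP; rewrite eqn_leq rk_join_atom_le //=.
apply: rk_lt => //; apply: lt_def; first exact: leJl.
by apply/eqP => e; move: hna; rewrite e leJr.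
Qed.

Lemma modlaw F x p : modular_flat F -> le p F -> meet (join x p) F = join (meet x F) p.
Proof.
move=> hF hpF.
set y := join (meet x F) p; set w := meet (join x p) F.
have hyw : le y w.
  apply: leJ => //; apply: leM => //.
  - exact: (leT HT (leMl HT x F) (leJl HT x p)).
  - exact: leMr.
  - exact: leJr.
have e1 := hF (join x p).
have e2 := hF x.
have e3 := Hs y x.
have hjF : join F (join x p) = join F x.
  apply: leA => //.
    apply: leJ => //; first exact: leJl.
    by apply: leJ => //; [exact: leJr|exact: (leT HT hpF (leJl HT F x))].
  apply: leJ => //; first exact: leJl.
  exact: (leT HT (leJl HT x p) (leJr HT F (join x p))).
have hyx : join y x = join x p.
  apply: leA => //.
    apply: leJ => //; last exact: leJl.
    by apply: leJ => //; [exact: (leT HT (leMl HT x F) (leJl HT x p))|exact: leJr].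
  apply: leJ => //; first exact: leJr.
  exact: (leT HT (leJr HT (meet x F) p) (leJl HT y x)).
have hmy : rk (meet x F) <= rk (meet y x).
  apply: rk_le => //; apply: leM => //; [exact: leJl|exact: leMl].
rewrite hjF (meetC HT F) in e1; rewrite (meetC HT F) in e2.
rewrite hyx in e3.
have hwy : rk w <= rk y by rewrite /w; lia.
by symmetry; apply: rk_ge_inj.
Qed.

End Geom.

Section Emb.
Variables L E : rawLat.
Hypothesis HL : geometric L.
Variable i : car L -> car E.
Hypothesis Hm : modext i.
Let HE : geometric E. Proof. by case: Hm. Qed.
Let HLl : is_lattice L. Proof. by case: HL. Qed.
Let HEl : is_lattice E. Proof. by case: HE. Qed.
Let Hemb : embedding i. Proof. by case: Hm. Qed.
Let Hinj : injective i. Proof. by case: Hemb. Qed.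
Let Hjoin : forall A B, i (join A B) = join (i A) (i B). Proof. by case: Hemb. Qed.
Let Himg : forall x, (exists A, i A = x) <-> le x (i (top L)). Proof. by case: Hm. Qed.
Let Hmod : modular_flat (i (top L)). Proof. by case: Hm. Qed.

Definition Fi := i (top L).

Lemma i_le A B : le (i A) (i B) = le A B.
Proof.
rewrite (le_join HEl) (le_join HLl) -Hjoin.
by apply/eqP/eqP => [/Hinj|->].
Qed.
Lemma i_injective : injective i. Proof. exact: Hinj. Qed.
Lemma i_joinE A B : i (join A B) = join (i A) (i B). Proof. exact: Hjoin. Qed.
Lemma i_leF A : le (i A) Fi. Proof. by rewrite i_le; apply: le_top. Qed.
Lemma i_img x : le x Fi -> exists A, i A = x. Proof. by move/Himg. Qed.
Lemma i_bot : i (bot L) = bot E.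
Proof.
case: (i_img (le0 HEl Fi)) => A hA.
apply: (leA HEl); last exact: le0.
by rewrite -hA i_le le0.
Qed.
Lemma i_meet A B : i (meet A B) = meet (i A) (i B).
Proof.
have : le (meet (i A) (i B)) Fi by exact: (leT HEl (leMl HEl (i A) (i B)) (i_leF A)).
case/i_img => C hC; rewrite -hC.
apply: (leA HEl).
  by rewrite hC; apply: leM => //; rewrite i_le; [exact: leMl|exact: leMr].
rewrite i_le; apply: leM => //; rewrite -i_le hC; [exact: leMl|exact: leMr].
Qed.
Lemma i_lt A B : lt (i A) (i B) = lt A B.
Proof. by rewrite /lt i_le (inj_eq Hinj). Qed.
Lemma i_cover A B : Defs.cover A B -> Defs.cover (i A) (i B).
Proof.
case/andP => h1 /forallP h2; apply/andP; split; first by rewrite i_lt.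
apply/forallP => z; apply/negP => /andP [hz1 hz2].
have : le z Fi by exact: (leT HEl (ltW hz2) (i_leF B)).
case/i_img => C hC; subst z.
by move: (h2 C); rewrite -!i_lt hz1 hz2.
Qed.
Lemma i_rk A : rk (i A) = rk A.
Proof.
have HrL := geo_ranked HL; have HrE := geo_ranked HE.
case: (chain_exists HLl (le0 HLl A)) => s hs.
rewrite (rkE HLl HrL hs); rewrite -(size_map i s); apply: (rkE HEl HrE).
case/andP: hs => hp /eqP hl; apply/andP; split.
  rewrite -i_bot; elim: s (bot L) hp {hl} => [|a s IH] b //= /andP [hc hp].
  by rewrite i_cover //= IH.
by rewrite -i_bot last_map hl.
Qed.

Definition Aof (x : car E) : car L := odflt (bot L) [pick A | i A == meet x Fi].

Lemma AofP x : i (Aof x) = meet x Fi.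
Proof.
rewrite /Aof; case: pickP => [A /eqP //|h].
case: (i_img (leMr HEl x Fi)) => A hA.
by move: (h A); rewrite hA eqxx.
Qed.
Lemma Aof_i A : Aof (i A) = A.
Proof. by apply: Hinj; rewrite AofP meet_idl // i_leF. Qed.
Lemma Aof_le x y : le x y -> le (Aof x) (Aof y).
Proof. by move=> h; rewrite -i_le !AofP; apply: leM2 => //; apply: leR. Qed.
Lemma Aof_leE x : le (i (Aof x)) x. Proof. by rewrite AofP leMl. Qed.
Lemma rk_Aof x : rk (Aof x) = rk (meet x Fi). Proof. by rewrite -i_rk AofP. Qed.
Lemma Aof_bot : Aof (bot E) = bot L. Proof. by rewrite -i_bot Aof_i. Qed.
Lemma Aof_atom H : atom H -> ~~ le H Fi -> Aof H = bot L.
Proof. by move=> ha hn; apply: Hinj; rewrite AofP i_bot (meetC HEl) meet_atom_bot. Qed.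
Lemma Aof_eq x A : meet x Fi = i A -> Aof x = A.
Proof. by move=> e; apply: Hinj; rewrite AofP. Qed.
Lemma modlawF x A : meet (join x (i A)) Fi = join (meet x Fi) (i A).
Proof. by apply: modlaw => //; apply: i_leF. Qed.
Lemma modrk x : rk (meet x Fi) + rk (join x Fi) = rk Fi + rk x.
Proof. by rewrite (meetC HEl) (joinC HEl); apply: Hmod. Qed.

End Emb.

Section RankFun.
Variable T : rawLat.
Hypothesis HT : is_lattice T.
Variable r : car T -> nat.
Variable S : car T -> Prop.
Hypothesis H0 : r (bot T) = 0.
Hypothesis H1 : forall x y, lt x y -> r x < r y.
Hypothesis H2 : forall x y, lt x y -> exists a, [/\ S a, le a y & ~~ le a x].
Hypothesis H3 : forall w a, S a -> r (join w a) <= (r w).+1.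
Hypothesis H4 : forall a, S a -> r a = 1.
Implicit Types x y z w : car T.

Lemma rf_le x y : le x y -> r x <= r y.
Proof. by move=> h; case: (eqVneq x y) => [->//|n]; apply/ltnW/H1/lt_def. Qed.

Lemma rf_cover x y : Defs.cover x y -> r y = (r x).+1.
Proof.
move=> hc; have hxy := cover_lt hc.
case: (H2 hxy) => a [hS hay hax].
have hz : le (join x a) y by apply: leJ => //; exact: ltW.
have hxz : lt x (join x a).
  apply: lt_def; first exact: leJl.
  by apply/eqP => e; move: hax; rewrite e leJr.
have e : join x a = y.
  case: (eqVneq (join x a) y) => // ne.
  by case/andP: hc => _ /forallP /(_ (join x a)); rewrite hxz (lt_def hz ne).
have := H3 x hS; rewrite e => h; have := H1 hxy; lia.
Qed.

Lemma rf_chain x s y : satchain x s y -> r y = r x + size s.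
Proof.
elim: s x => [|a s IH] x /andP [/= hp /eqP hl]; first by rewrite -hl addn0.
case/andP: hp => hc hp.
rewrite (IH a); last by apply/andP; split => //; apply/eqP.
by rewrite (rf_cover hc) addSnnS.
Qed.

Lemma rf_ranked : ranked T.
Proof. by move=> F s1 s2 /rf_chain h1 /rf_chain h2; move: h1 h2; rewrite H0 !add0n => <-. Qed.

Lemma rf_rk x : rk x = r x.
Proof.
case: (chain_exists HT (le0 HT x)) => s hs.
by rewrite (rkE HT rf_ranked hs) (rf_chain hs) H0.
Qed.

Lemma rf_atom a : S a -> atom a.
Proof. by move=> h; apply: (rk_atom HT rf_ranked); rewrite rf_rk H4. Qed.

Lemma rf_semimod : semimodular T.
Proof.
move=> p q; rewrite !rf_rk.
suff: forall k q, r p - r (meet p q) <= k -> r (meet p q) + r (join p q) <= r p + r q.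
  by apply; apply: leqnn.
elim => [|k IH] {}q hk.
- case: (boolP (le p q)) => hpq.
    by rewrite meet_idl // join_idr.
  have hlt : lt (meet p q) p.
    apply: lt_def; first exact: leMl.
    by apply/eqP => e; move: hpq; rewrite -e leMr.
  have := H1 hlt; lia.
- case: (boolP (le p q)) => hpq.
    by rewrite meet_idl // join_idr.
  have hlt : lt (meet p q) p.
    apply: lt_def; first exact: leMl.
    by apply/eqP => e; move: hpq; rewrite -e leMr.
  case: (H2 hlt) => a [hS hap han].
  set q' := join q a.
  have haq' : le a (meet p q') by apply: leM => //; exact: leJr.
  have hlt2 : lt (meet p q) (meet p q').
    apply: lt_def; first by apply: leM2 => //; [exact: leR|exact: leJl].
    by apply/eqP => e; move: han; rewrite e haq'.
  have r1 := H1 hlt2.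
  have r2 : r (meet p q') <= r p by apply: rf_le; exact: leMl.
  have hj : join p q' = join p q.
    rewrite /q' joinA //; apply: join_idl => //.
    exact: (leT HT hap (leJl HT p q)).
  have r3 := H3 q hS.
  have := IH q'; rewrite hj => h.
  have : r (meet p q') + r (join p q) <= r p + r q'.
    by apply: h; lia.
  rewrite -/q' in r3; lia.
Qed.

Lemma rf_atomic : atomic T.
Proof.
move=> F; exists [set a | atom a && le a F]; split.
  by move=> a; rewrite inE => /andP [].
apply/is_lubP; split.
  by move=> a; rewrite inE => /andP [].
move=> w hw; apply/negPn/negP => hFw.
have hlt : lt (meet F w) F.
  apply: lt_def; first exact: leMl.
  by apply/eqP => e; move: hFw; rewrite -e leMr.
case: (H2 hlt) => a [hS haF han].
have ha := rf_atom hS.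
have haw : le a w by apply: hw; rewrite inE ha haF.
by move: han; rewrite (leM HT haF haw).
Qed.

Lemma rf_geometric : geometric T.
Proof. split; [exact: HT|exact: rf_ranked|exact: rf_atomic|exact: rf_semimod]. Qed.

End RankFun.

Section Pushout.
Variables L E1 E2 : rawLat.
Hypothesis HL : geometric L.
Variable i1 : car L -> car E1.
Variable i2 : car L -> car E2.
Hypothesis M1 : modext i1.
Hypothesis M2 : modext i2.
Let G1 : geometric E1. Proof. by case: M1. Qed.
Let G2 : geometric E2. Proof. by case: M2. Qed.
Let HLl : is_lattice L. Proof. by case: HL. Qed.
Let HE1 : is_lattice E1. Proof. by case: G1. Qed.
Let HE2 : is_lattice E2. Proof. by case: G2. Qed.
Let HrL : ranked L. Proof. by case: HL. Qed.
Let Hr1 : ranked E1. Proof. by case: G1. Qed.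
Let Hr2 : ranked E2. Proof. by case: G2. Qed.

Local Notation P := (poLat i1 i2).
Local Notation F1 := (Fi i1).
Local Notation F2 := (Fi i2).
Local Notation A1 := (Aof i1).
Local Notation A2 := (Aof i2).

Lemma po_condE x : po_cond i1 i2 x = (A1 x.1 == A2 x.2).
Proof.
rewrite /po_cond; apply/idP/eqP.
  case/orP => [/existsP [A /andP [/eqP h1 /eqP h2]]|/eqP ->].
    by rewrite (Aof_eq M1 (esym h1)) (Aof_eq M2 (esym h2)).
  by rewrite /= (Aof_bot HL M1) (Aof_bot HL M2).
move=> h; apply/orP; left; apply/existsP; exists (A1 x.1).
by rewrite {1}(AofP M1) h (AofP M2) !eqxx.
Qed.

Definition pk (x1 : car E1) (x2 : car E2) : car P := insubd (po_bot i1 i2) (x1, x2).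

Lemma pkV x1 x2 : A1 x1 = A2 x2 -> val (pk x1 x2) = (x1, x2).
Proof. by move=> h; rewrite val_insubd po_condE /= h eqxx. Qed.

Lemma Acond (p : car P) : A1 (val p).1 = A2 (val p).2.
Proof. by apply/eqP; rewrite -po_condE; apply: valP. Qed.

Lemma pk_val (p : car P) : pk (val p).1 (val p).2 = p.
Proof. by apply: val_inj; rewrite pkV ?Acond //; case: (val p). Qed.

Definition Ap (p : car P) := A1 (val p).1.
Lemma Ap2 p : Ap p = A2 (val p).2. Proof. exact: Acond. Qed.

Lemma le_Aof1 A x : le (i1 A) x -> le A (A1 x).
Proof. by move=> h; rewrite -(i_le HL M1) (AofP M1); apply: leM => //; apply: (i_leF HL M1). Qed.
Lemma le_Aof2 A x : le (i2 A) x -> le A (A2 x).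
Proof. by move=> h; rewrite -(i_le HL M2) (AofP M2); apply: leM => //; apply: (i_leF HL M2). Qed.

Lemma meet_meetF (T : rawLat) (HT : is_lattice T) (x y F : car T) :
  meet (meet x y) F = meet (meet x F) (meet y F).
Proof.
apply: leA => //; apply: leM => //.
- apply: leM => //; [exact: (leT HT (leMl HT _ _) (leMl HT x y))|exact: leMr].
- apply: leM => //; [exact: (leT HT (leMl HT _ _) (leMr HT x y))|exact: leMr].
- apply: leM => //; [exact: (leT HT (leMl HT _ _) (leMl HT x F))|exact: (leT HT (leMr HT _ _) (leMl HT y F))].
- exact: (leT HT (leMl HT _ _) (leMr HT x F)).
Qed.

Lemma Aof_meet1 x y : A1 (meet x y) = meet (A1 x) (A1 y).
Proof. by apply: (Aof_eq M1); rewrite (i_meet HL M1) !(AofP M1) meet_meetF. Qed.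
Lemma Aof_meet2 x y : A2 (meet x y) = meet (A2 x) (A2 y).
Proof. by apply: (Aof_eq M2); rewrite (i_meet HL M2) !(AofP M2) meet_meetF. Qed.

Definition pjm (p q : car P) : car L :=
  join (A1 (join (val p).1 (val q).1)) (A2 (join (val p).2 (val q).2)).
Definition pjoin (p q : car P) : car P :=
  pk (join (join (val p).1 (val q).1) (i1 (pjm p q)))
     (join (join (val p).2 (val q).2) (i2 (pjm p q))).

Lemma pjoin_cond1 p q : A1 (join (join (val p).1 (val q).1) (i1 (pjm p q))) = pjm p q.
Proof.
apply: (Aof_eq M1); rewrite (modlawF HL M1) -(AofP M1) -(i_joinE M1); congr i1.
by apply: join_idr => //; apply: leJl.
Qed.
Lemma pjoin_cond2 p q : A2 (join (join (val p).2 (val q).2) (i2 (pjm p q))) = pjm p q.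
Proof.
apply: (Aof_eq M2); rewrite (modlawF HL M2) -(AofP M2) -(i_joinE M2); congr i2.
by apply: join_idr => //; apply: leJr.
Qed.
Lemma pjoinV p q : val (pjoin p q) =
  (join (join (val p).1 (val q).1) (i1 (pjm p q)), join (join (val p).2 (val q).2) (i2 (pjm p q))).
Proof. by rewrite pkV // pjoin_cond1 pjoin_cond2. Qed.
Lemma Ap_pjoin p q : Ap (pjoin p q) = pjm p q.
Proof. by rewrite /Ap pjoinV pjoin_cond1. Qed.

Lemma pjoin_spec p q : is_lub [set p; q] (pjoin p q).
Proof.
apply/is_lubP; split.
  move=> s; rewrite !inE => /orP [] /eqP -> /=; rewrite pjoinV /=; apply/andP; split.
  - exact: (leT HE1 (leJl HE1 _ _) (leJl HE1 _ _)).
  - exact: (leT HE2 (leJl HE2 _ _) (leJl HE2 _ _)).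
  - exact: (leT HE1 (leJr HE1 _ _) (leJl HE1 _ _)).
  - exact: (leT HE2 (leJr HE2 _ _) (leJl HE2 _ _)).
move=> w hw.
have /andP [h11 h12] : le p w by apply: hw; rewrite !inE eqxx.
have /andP [h21 h22] : le q w by apply: hw; rewrite !inE eqxx orbT.
have hu : le (join (val p).1 (val q).1) (val w).1 by apply: leJ.
have hv : le (join (val p).2 (val q).2) (val w).2 by apply: leJ.
have hm : le (pjm p q) (Ap w).
  apply: leJ => //; first exact: (Aof_le HL M1).
  by rewrite Ap2; apply: (Aof_le HL M2).
rewrite /= pjoinV /=; apply/andP; split; apply: leJ => //.
  by apply: (leT HE1 _ (Aof_leE M1 (val w).1)); rewrite (i_le HL M1).
by apply: (leT HE2 _ (Aof_leE M2 (val w).2)); rewrite (i_le HL M2) -Ap2.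
Qed.

Definition pmeet (p q : car P) : car P := pk (meet (val p).1 (val q).1) (meet (val p).2 (val q).2).
Lemma pmeetV p q : val (pmeet p q) = (meet (val p).1 (val q).1, meet (val p).2 (val q).2).
Proof. by rewrite pkV // Aof_meet1 Aof_meet2 !Acond. Qed.

Lemma pmeet_spec p q : is_glb [set p; q] (pmeet p q).
Proof.
apply/is_glbP; split.
  move=> s; rewrite !inE => /orP [] /eqP -> /=; rewrite pmeetV /=; apply/andP; split;
  first [exact: leMl | exact: leMr].
move=> w hw.
have /andP [h11 h12] : le w p by apply: hw; rewrite !inE eqxx.
have /andP [h21 h22] : le w q by apply: hw; rewrite !inE eqxx orbT.
by rewrite /= pmeetV /=; apply/andP; split; apply: leM.
Qed.

Lemma po_lattice : is_lattice P.
Proof.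
split; last split.
- split.
  + by move=> p /=; rewrite !leR.
  + move=> p q /andP [/andP [a1 a2] /andP [b1 b2]]; apply: val_inj.
    by case: (val p) (val q) a1 a2 b1 b2 => [x1 x2] [y1 y2] /= a1 a2 b1 b2; rewrite (leA HE1 a1 b1) (leA HE2 a2 b2).
  + by move=> q p s /andP [a1 a2] /andP [b1 b2]; apply/andP; split; [exact: (leT HE1 a1 b1)|exact: (leT HE2 a2 b2)].
  + by move=> p /=; rewrite !le0.
- by move=> x y; exists (pjoin x y); apply: pjoin_spec.
- by move=> x y; exists (pmeet x y); apply: pmeet_spec.
Qed.
Let HP := po_lattice.

Lemma po_joinE p q : join p q = pjoin p q. Proof. exact: lubE (pjoin_spec p q). Qed.
Lemma po_meetE p q : meet p q = pmeet p q. Proof. exact: glbE (pmeet_spec p q). Qed.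


Definition pr (p : car P) : nat := rk (val p).1 + rk (val p).2 - rk (Ap p).

Let Hs1 : semimodular E1. Proof. by case: G1. Qed.
Let Hs2 : semimodular E2. Proof. by case: G2. Qed.
Let iat1 : forall a, atom a -> atom (i1 a). Proof. by case: M1 => _ [_ _ _ h]. Qed.
Let iat2 : forall a, atom a -> atom (i2 a). Proof. by case: M2 => _ [_ _ _ h]. Qed.

Lemma rkAp1 p : rk (Ap p) <= rk (val p).1.
Proof. by rewrite -(i_rk HL M1); apply: (rk_le HE1 Hr1); apply: (Aof_leE M1). Qed.
Lemma rkAp2 p : rk (Ap p) <= rk (val p).2.
Proof. by rewrite Ap2 -(i_rk HL M2); apply: (rk_le HE2 Hr2); apply: (Aof_leE M2). Qed.

Definition Sp (q : car P) : Prop :=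
  (exists e, [/\ atom e, ~~ le e F1 & q = pk e (bot E2)]) \/
  (exists e, [/\ atom e, ~~ le e F2 & q = pk (bot E1) e]) \/
  (exists t, atom t /\ q = pk (i1 t) (i2 t)).

Lemma pkV1 e : atom e -> ~~ le e F1 -> val (pk e (bot E2)) = (e, bot E2).
Proof. by move=> ha hn; rewrite pkV // (Aof_atom HL M1 ha hn) (Aof_bot HL M2). Qed.
Lemma pkV2 e : atom e -> ~~ le e F2 -> val (pk (bot E1) e) = (bot E1, e).
Proof. by move=> ha hn; rewrite pkV // (Aof_atom HL M2 ha hn) (Aof_bot HL M1). Qed.
Lemma pkV0 t : val (pk (i1 t) (i2 t)) = (i1 t, i2 t).
Proof. by rewrite pkV // (Aof_i HL M1) (Aof_i HL M2). Qed.

Lemma pr0 : pr (bot P) = 0.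
Proof. by rewrite /pr /Ap /= !(rk0 HE1 Hr1) (rk0 HE2 Hr2). Qed.

Lemma pr_Sp q : Sp q -> pr q = 1.
Proof.
case=> [[e [ha hn ->]]|[[e [ha hn ->]]|[t [ha ->]]]]; rewrite /pr /Ap.
- by rewrite pkV1 //= (Aof_atom HL M1 ha hn) (rk0 HLl HrL) (rk0 HE2 Hr2) (atom_rk HE1 Hr1 ha).
- by rewrite pkV2 //= (Aof_bot HL M1) (rk0 HLl HrL) (rk0 HE1 Hr1) (atom_rk HE2 Hr2 ha).
- by rewrite pkV0 /= (Aof_i HL M1) !(i_rk HL) // (atom_rk HLl HrL ha).
Qed.

Lemma pr_lt p q : lt p q -> pr p < pr q.
Proof.
move=> /andP [ne /andP [l1 l2]].
have a1 := rkAp1 p; have a2 := rkAp2 p; have b1 := rkAp1 q; have b2 := rkAp2 q.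
rewrite /pr; case: (eqVneq (val p).1 (val q).1) => e1.
  have eA : Ap p = Ap q by rewrite /Ap e1.
  have e2 : (val p).2 != (val q).2.
    apply: contra ne => /eqP e2; apply/eqP; apply: val_inj.
    by case: (val p) (val q) e1 e2 => [x1 x2] [y1 y2] /= -> ->.
  have := rk_lt HE2 Hr2 (lt_def l2 e2); rewrite eA e1 in a2 *; lia.
have h1 := rk_lt HE1 Hr1 (lt_def l1 e1).
have m1 := modrk M2 (val p).2; have m2 := modrk M2 (val q).2.
rewrite -!(rk_Aof HL M2) -!Ap2 in m1 m2.
have : rk (join (val p).2 F2) <= rk (join (val q).2 F2).
  by apply: (rk_le HE2 Hr2); apply: leJ2 => //; apply: leR.
lia.
Qed.

Lemma pr_sep p q : lt p q -> exists a, [/\ Sp a, le a q & ~~ le a p].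
Proof.
move=> /andP [ne /andP [l1 l2]].
case: (eqVneq (val p).1 (val q).1) => e1.
  have e2 : (val p).2 != (val q).2.
    apply: contra ne => /eqP e2; apply/eqP; apply: val_inj.
    by case: (val p) (val q) e1 e2 => [x1 x2] [y1 y2] /= -> ->.
  case: (sep_atom G2 (lt_def l2 e2)) => e [ha hey hex].
  have hn : ~~ le e F2.
    apply: contra hex => heF.
    have : le e (meet (val q).2 F2) by apply: leM.
    rewrite -(AofP M2) -Ap2 /Ap -e1 -/(Ap p) Ap2 => h.
    exact: (leT HE2 h (Aof_leE M2 _)).
  exists (pk (bot E1) e); split; first by right; left; exists e.
    by rewrite /= pkV2 //= hey (le0 HE1).
  by rewrite /= pkV2 //= negb_and hex orbT.
case: (eqVneq (Ap p) (Ap q)) => eA.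
  case: (sep_atom G1 (lt_def l1 e1)) => e [ha hey hex].
  have hn : ~~ le e F1.
    apply: contra hex => heF.
    have : le e (meet (val q).1 F1) by apply: leM.
    rewrite -(AofP M1) -/(Ap q) -eA => h.
    exact: (leT HE1 h (Aof_leE M1 _)).
  exists (pk e (bot E2)); split; first by left; exists e.
    by rewrite /= pkV1 //= hey (le0 HE2).
  by rewrite /= pkV1 //= negb_and hex.
have hA : le (Ap p) (Ap q) by apply: (Aof_le HL M1).
case: (sep_atom HL (lt_def hA eA)) => t [ha htq htp].
exists (pk (i1 t) (i2 t)); split; first by right; right; exists t.
  rewrite /= pkV0 /=; apply/andP; split.
    by apply: (leT HE1 _ (Aof_leE M1 (val q).1)); rewrite (i_le HL M1).
  by apply: (leT HE2 _ (Aof_leE M2 (val q).2)); rewrite (i_le HL M2) -Ap2.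
rewrite /= pkV0 /= negb_and; apply/orP; left.
by apply: contra htp => /le_Aof1.
Qed.

Lemma pr_join w q : Sp q -> pr (join w q) <= (pr w).+1.
Proof.
have a1 := rkAp1 w; have a2 := rkAp2 w.
rewrite po_joinE.
case=> [[e [ha hn ->]]|[[e [ha hn ->]]|[t [ha ->]]]].
- set u := join (val w).1 e; set a := A1 u.
  have hm : pjm w (pk e (bot E2)) = a.
    rewrite /pjm pkV1 //= join0r // -Ap2; apply: join_idl => //.
    by apply: (Aof_le HL M1); apply: leJl.
  have hv : val (pjoin w (pk e (bot E2))) = (u, join (val w).2 (i2 a)).
    rewrite pjoinV hm pkV1 //= join0r //; congr pair; apply: join_idl => //.
    exact: (Aof_leE M1).
  rewrite /pr {1}/Ap hv /= -/a.
  have r1 : rk u <= (rk (val w).1).+1 by apply: rk_join_atom_le.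
  have r2 := Hs2 (val w).2 (i2 a).
  have r3 : rk (Ap w) <= rk (meet (val w).2 (i2 a)).
    rewrite -(i_rk HL M2); apply: (rk_le HE2 Hr2); rewrite Ap2; apply: leM => //.
      exact: (Aof_leE M2).
    by rewrite (i_le HL M2) -Ap2; apply: (Aof_le HL M1); apply: leJl.
  have r4 : rk a <= rk (join (val w).2 (i2 a)).
    by rewrite -(i_rk HL M2); apply: (rk_le HE2 Hr2); apply: leJr.
  rewrite (i_rk HL M2) in r2.
  rewrite /= in a1 a2 r1 r2 r3 r4; lia.
- set v := join (val w).2 e; set b := A2 v.
  have hm : pjm w (pk (bot E1) e) = b.
    rewrite /pjm pkV2 //= join0r // -/(Ap w) Ap2; apply: join_idr => //.
    by apply: (Aof_le HL M2); apply: leJl.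
  have hv : val (pjoin w (pk (bot E1) e)) = (join (val w).1 (i1 b), v).
    rewrite pjoinV hm pkV2 //= join0r //; congr pair; apply: join_idl => //.
    exact: (Aof_leE M2).
  have hA : Ap (pjoin w (pk (bot E1) e)) = b by rewrite Ap_pjoin.
  rewrite /pr hA hv /=.
  have r1 : rk v <= (rk (val w).2).+1 by apply: rk_join_atom_le.
  have r2 := Hs1 (val w).1 (i1 b).
  have r3 : rk (Ap w) <= rk (meet (val w).1 (i1 b)).
    rewrite -(i_rk HL M1); apply: (rk_le HE1 Hr1); apply: leM => //.
      exact: (Aof_leE M1).
    by rewrite (i_le HL M1) Ap2; apply: (Aof_le HL M2); apply: leJl.
  have r4 : rk b <= rk v.
    by rewrite -(i_rk HL M2); apply: (rk_le HE2 Hr2); apply: (Aof_leE M2).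
  rewrite (i_rk HL M1) in r2.
  rewrite /= in a1 a2 r1 r2 r3 r4 *; lia.
- set u := join (val w).1 (i1 t); set v := join (val w).2 (i2 t).
  have hu : A1 u = join (Ap w) t.
    by apply: (Aof_eq M1); rewrite (modlawF HL M1) -(AofP M1) (i_joinE M1).
  have hv' : A2 v = join (Ap w) t.
    by apply: (Aof_eq M2); rewrite (modlawF HL M2) -(AofP M2) (i_joinE M2) Ap2.
  have hm : pjm w (pk (i1 t) (i2 t)) = A1 u.
    by rewrite /pjm pkV0 /= -/u -/v hv' hu join_idl //; apply: leR.
  have hval : val (pjoin w (pk (i1 t) (i2 t))) = (u, v).
    rewrite pjoinV hm pkV0 /= -/u -/v; congr pair; apply: join_idl => //.
      exact: (Aof_leE M1).
    by rewrite hu -hv'; apply: (Aof_leE M2).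
  rewrite /pr {1}/Ap hval /=.
  have r1 : rk v <= (rk (val w).2).+1 by apply: rk_join_atom_le => //; apply: iat2.
  have m1 := modrk M1 u; have m2 := modrk M1 (val w).1.
  rewrite -(rk_Aof HL M1) in m1; rewrite -(rk_Aof HL M1) -/(Ap w) in m2.
  have ej : join u F1 = join (val w).1 F1.
    rewrite /u -joinA //; congr join; apply: join_idr => //; exact: (i_leF HL M1).
  rewrite ej in m1.
  have r4 : rk (A1 u) <= rk u.
    by rewrite -(i_rk HL M1); apply: (rk_le HE1 Hr1); apply: (Aof_leE M1).
  rewrite /= in a1 a2 r1 r4 m1 m2 *.
lia.
Qed.

Lemma po_geometric : geometric P.
Proof.
apply: (rf_geometric HP (r := pr) (S := Sp)).
- exact: pr0.
- exact: pr_lt.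
- exact: pr_sep.
- exact: pr_join.
- exact: pr_Sp.
Qed.

Lemma po_rk p : rk p = pr p.
Proof.
exact: (rf_rk HP pr0 pr_lt pr_sep pr_join p).
Qed.


Let HrP : ranked P. Proof. by case: po_geometric. Qed.

Local Notation pio := (po_iota i1 i2).

Lemma pioV A : val (pio A) = (i1 A, i2 A). Proof. exact: pkV0. Qed.
Lemma Ap_pio A : Ap (pio A) = A. Proof. by rewrite /Ap pioV (Aof_i HL M1). Qed.
Lemma pr_pio A : pr (pio A) = rk A.
Proof. rewrite /pr Ap_pio pioV /= !(i_rk HL) //; lia. Qed.

Lemma pio_join A B : pio (join A B) = join (pio A) (pio B).
Proof.
apply: val_inj; rewrite po_joinE pjoinV /pjm !pioV /= -(i_joinE M1) -(i_joinE M2).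
rewrite (Aof_i HL M1) (Aof_i HL M2) (join_idl HLl (leR HLl (join A B))).
by rewrite (join_idl HE1 (leR HE1 _)) (join_idl HE2 (leR HE2 _)).
Qed.

Lemma meet_Phi (y : car P) : meet (pio (top L)) y = pio (Ap y).
Proof.
apply: val_inj; rewrite po_meetE pmeetV !pioV /=.
by rewrite (meetC HE1) (meetC HE2) -(AofP M1) -(AofP M2) -Ap2.
Qed.

Lemma join_PhiV (y : car P) : val (join (pio (top L)) y) = (join F1 (val y).1, join F2 (val y).2).
Proof.
have e1 : A1 (join F1 (val y).1) = top L.
  by apply: (Aof_eq M1); apply: meet_idr => //; apply: leJl.
have e2 : A2 (join F2 (val y).2) = top L.
  by apply: (Aof_eq M2); apply: meet_idr => //; apply: leJl.
rewrite po_joinE pjoinV /pjm !pioV /= e1 e2 (join_idl HLl (leR HLl (top L))).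
by congr pair; apply: join_idl => //; apply: leJl.
Qed.

Lemma po_modext : modext pio.
Proof.
split.
- exact: po_geometric.
- split.
  + move=> A B /(congr1 val); rewrite !pioV => -[] /(i_injective M1).
    by [].
  + by move=> A B h; rewrite /= !pioV /= !(i_le HL) // h.
  + exact: pio_join.
  + move=> A ha; apply: (rk_atom HP HrP).
    by rewrite po_rk pr_pio (atom_rk HLl HrL ha).
- move=> x; split.
    by case=> A <-; rewrite /= !pioV /= !(i_le HL) // le_top.
  rewrite /= pioV /= => /andP [h1 h2]; exists (Ap x); apply: val_inj.
  rewrite pioV {1}/Ap (AofP M1) Ap2 (AofP M2) (meet_idl HE1 h1) (meet_idl HE2 h2).
  by rewrite -surjective_pairing.
- move=> y.
  have e1 : A1 (join F1 (val y).1) = top L.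
    by apply: (Aof_eq M1); apply: meet_idr => //; apply: leJl.
  have m1 := modrk M1 (val y).1; have m2 := modrk M2 (val y).2.
  rewrite -(rk_Aof HL M1) (joinC HE1) (i_rk HL M1) in m1.
  rewrite -(rk_Aof HL M2) (joinC HE2) (i_rk HL M2) -Ap2 in m2.
  have a1 := rkAp1 y; have a2 := rkAp2 y.
  rewrite !po_rk meet_Phi pr_pio pr_pio /pr /Ap !join_PhiV.
  rewrite /Ap /= in e1 m1 m2 a1 a2 *.
  rewrite e1; lia.
Qed.

Definition emb1 (x : car E1) : car P := pk x (i2 (A1 x)).
Definition emb2 (x : car E2) : car P := pk (i1 (A2 x)) x.
Lemma emb1V x : val (emb1 x) = (x, i2 (A1 x)). Proof. by rewrite pkV // (Aof_i HL M2). Qed.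
Lemma emb2V x : val (emb2 x) = (i1 (A2 x), x). Proof. by rewrite pkV // (Aof_i HL M1). Qed.
Lemma Ap_emb1 x : Ap (emb1 x) = A1 x. Proof. by rewrite /Ap emb1V. Qed.
Lemma Ap_emb2 x : Ap (emb2 x) = A2 x. Proof. by rewrite /Ap emb2V /= (Aof_i HL M1). Qed.

Lemma inj1_emb H : atom H -> po_inj1 i1 i2 H = emb1 H.
Proof.
move=> ha; rewrite /po_inj1 /emb1 /pk; case: pickP => [A /eqP hA|hn].
  by rewrite -hA (Aof_i HL M1).
have hF : ~~ le H F1.
  apply/negP => /(i_img M1) [A hA]; by move: (hn A); rewrite hA eqxx.
by rewrite (Aof_atom HL M1 ha hF) (i_bot HL M2).
Qed.
Lemma inj2_emb H : atom H -> po_inj2 i1 i2 H = emb2 H.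
Proof.
move=> ha; rewrite /po_inj2 /emb2 /pk; case: pickP => [A /eqP hA|hn].
  by rewrite -hA (Aof_i HL M2).
have hF : ~~ le H F2.
  apply/negP => /(i_img M2) [A hA]; by move: (hn A); rewrite hA eqxx.
by rewrite (Aof_atom HL M2 ha hF) (i_bot HL M1).
Qed.

Lemma pr_emb1 x : pr (emb1 x) = rk x.
Proof. by rewrite /pr Ap_emb1 emb1V /= (i_rk HL M2); lia. Qed.
Lemma pr_emb2 x : pr (emb2 x) = rk x.
Proof. by rewrite /pr Ap_emb2 emb2V /= (i_rk HL M1); lia. Qed.

Lemma emb1_atom H : atom H -> atom (emb1 H).
Proof. by move=> ha; apply: (rk_atom HP HrP); rewrite po_rk pr_emb1 (atom_rk HE1 Hr1 ha). Qed.
Lemma emb2_atom H : atom H -> atom (emb2 H).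
Proof. by move=> ha; apply: (rk_atom HP HrP); rewrite po_rk pr_emb2 (atom_rk HE2 Hr2 ha). Qed.

Lemma emb1_join x y : emb1 (join x y) = join (emb1 x) (emb1 y).
Proof.
apply: val_inj; rewrite po_joinE pjoinV /pjm !emb1V /= -(i_joinE M2) (Aof_i HL M2).
have hle : le (join (A1 x) (A1 y)) (A1 (join x y)).
  by apply: leJ => //; apply: (Aof_le HL M1); [apply: leJl|apply: leJr].
rewrite (join_idl HLl hle) (join_idl HE1 (Aof_leE M1 _)) (join_idr HE2) // (i_le HL M2). exact: hle.
Qed.
Lemma emb2_join x y : emb2 (join x y) = join (emb2 x) (emb2 y).
Proof.
apply: val_inj; rewrite po_joinE pjoinV /pjm !emb2V /= -(i_joinE M1) (Aof_i HL M1).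
have hle : le (join (A2 x) (A2 y)) (A2 (join x y)).
  by apply: leJ => //; apply: (Aof_le HL M2); [apply: leJl|apply: leJr].
rewrite (join_idr HLl hle) (join_idl HE2 (Aof_leE M2 _)) (join_idr HE1) // (i_le HL M1). exact: hle.
Qed.
Lemma emb1_bot : emb1 (bot E1) = bot P.
Proof. by apply: val_inj; rewrite emb1V (Aof_bot HL M1) (i_bot HL M2). Qed.
Lemma emb2_bot : emb2 (bot E2) = bot P.
Proof. by apply: val_inj; rewrite emb2V (Aof_bot HL M2) (i_bot HL M1). Qed.

Lemma emb1_bigjoin s : bigjoin (map emb1 s) = emb1 (bigjoin s).
Proof.
rewrite (bigjoinE HP) (bigjoinE HE1); elim: s => [|a s IH] /=; first by rewrite emb1_bot.
by rewrite IH emb1_join.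
Qed.
Lemma emb2_bigjoin s : bigjoin (map emb2 s) = emb2 (bigjoin s).
Proof.
rewrite (bigjoinE HP) (bigjoinE HE2); elim: s => [|a s IH] /=; first by rewrite emb2_bot.
by rewrite IH emb2_join.
Qed.

Lemma map_inj1 J : all (@atom E1) J -> map (po_inj1 i1 i2) J = map emb1 J.
Proof. by move=> /allP h; apply/eq_in_map => H /h; apply: inj1_emb. Qed.
Lemma map_inj2 J : all (@atom E2) J -> map (po_inj2 i1 i2) J = map emb2 J.
Proof. by move=> /allP h; apply/eq_in_map => H /h; apply: inj2_emb. Qed.

Lemma pjoinV' p q x1 x2 y1 y2 : val p = (x1, x2) -> val q = (y1, y2) ->
  val (pjoin p q) =
  (join (join x1 y1) (i1 (join (A1 (join x1 y1)) (A2 (join x2 y2)))),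
   join (join x2 y2) (i2 (join (A1 (join x1 y1)) (A2 (join x2 y2))))).
Proof. by move=> hp hq; rewrite pjoinV /pjm hp hq. Qed.

Lemma deg_core (j1 : car E1) (j2 : car E2) :
  rk (meet (join (emb1 j1) (emb2 j2)) (pio (top L))) <= rk (join (emb1 j1) (emb2 j2)) /\
  rk (meet j1 F1) <= rk j1 /\ rk (meet j2 F2) <= rk j2 /\
  rk (join (emb1 j1) (emb2 j2)) + rk (meet j1 F1) + rk (meet j2 F2) =
  rk (meet (join (emb1 j1) (emb2 j2)) (pio (top L))) + rk j1 + rk j2.
Proof.
have hX0 := pjoinV' (emb1V j1) (emb2V j2).
have hu : A1 (join j1 (i1 (A2 j2))) = join (A1 j1) (A2 j2).
  by apply: (Aof_eq M1); rewrite (modlawF HL M1) -(AofP M1) (i_joinE M1).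
have hv : A2 (join (i2 (A1 j1)) j2) = join (A1 j1) (A2 j2).
  apply: (Aof_eq M2); rewrite (joinC HE2) (modlawF HL M2) -(AofP M2) (i_joinE M2).
  by rewrite (joinC HE2).
have h1 : le (i1 (join (A1 j1) (A2 j2))) (join j1 (i1 (A2 j2))).
  by rewrite -hu; apply: (Aof_leE M1).
have h2 : le (i2 (join (A1 j1) (A2 j2))) (join (i2 (A1 j1)) j2).
  by rewrite -hv; apply: (Aof_leE M2).
rewrite hu hv (join_idl HLl (leR HLl _)) (join_idl HE1 h1) (join_idl HE2 h2) in hX0.
rewrite -po_joinE in hX0.
have hAX : Ap (join (emb1 j1) (emb2 j2)) = join (A1 j1) (A2 j2) by rewrite /Ap hX0.
rewrite (meetC HP) meet_Phi !po_rk pr_pio /pr hAX hX0.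
have m1 := modrk M1 (join j1 (i1 (A2 j2))); have m2 := modrk M1 j1.
have m3 := modrk M2 (join (i2 (A1 j1)) j2); have m4 := modrk M2 j2.
rewrite -(rk_Aof HL M1) hu in m1; rewrite -(rk_Aof HL M1) in m2.
rewrite -(rk_Aof HL M2) hv in m3; rewrite -(rk_Aof HL M2) in m4.
have ej1 : join (join j1 (i1 (A2 j2))) F1 = join j1 F1.
  rewrite -joinA //; congr join; apply: join_idr => //; exact: (i_leF HL M1).
have ej2 : join (join (i2 (A1 j1)) j2) F2 = join j2 F2.
  rewrite (joinC HE2 (i2 _)) -joinA //; congr join; apply: join_idr => //; exact: (i_leF HL M2).
rewrite ej1 in m1; rewrite ej2 in m3.
rewrite -(rk_Aof HL M1) -(rk_Aof HL M2).
have r1 : rk (A1 j1) <= rk j1 by rewrite -(i_rk HL M1); apply: (rk_le HE1 Hr1); apply: (Aof_leE M1).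
have r2 : rk (A2 j2) <= rk j2 by rewrite -(i_rk HL M2); apply: (rk_le HE2 Hr2); apply: (Aof_leE M2).
have r3 : rk (join (A1 j1) (A2 j2)) <= rk (join j1 (i1 (A2 j2))).
  by rewrite -hu -(i_rk HL M1); apply: (rk_le HE1 Hr1); apply: (Aof_leE M1).
move: m1 m2 m3 m4 r1 r2 r3.
move: (rk (join (A1 j1) (A2 j2))) (rk (join j1 (i1 (A2 j2)))) (rk (join (i2 (A1 j1)) j2)) => n1 n2 n3.
move: (rk (A1 j1)) (rk (A2 j2)) (rk j1) (rk j2) => n4 n5 n6 n7.
move: (rk (join j1 F1)) (rk (join j2 F2)) (rk F1) (rk F2) => n8 n9 n10 n11.
rewrite /=; lia.
Qed.

End Pushout.

Import GRing.Theory.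

Section Iso.
Variables T1 T2 : rawLat.
Hypothesis H1 : is_lattice T1.
Hypothesis H2 : is_lattice T2.
Hypothesis R1 : ranked T1.
Hypothesis R2 : ranked T2.
Variable phi : car T1 -> car T2.
Variable psi : car T2 -> car T1.
Hypothesis K1 : cancel phi psi.
Hypothesis K2 : cancel psi phi.
Hypothesis Hle : forall x y, le x y = le (phi x) (phi y).

Lemma iso_bot : phi (bot T1) = bot T2.
Proof.
apply: (leA H2); last exact: le0.
by rewrite -(K2 (bot T2)) -Hle le0.
Qed.

Lemma iso_join x y : phi (join x y) = join (phi x) (phi y).
Proof.
apply: (leA H2).
  rewrite -(K2 (join (phi x) (phi y))) -Hle.
  by apply: leJ => //; rewrite Hle K2; [apply: leJl|apply: leJr].
by apply: leJ => //; rewrite -Hle; [apply: leJl|apply: leJr].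
Qed.

Lemma iso_lt x y : lt (phi x) (phi y) = lt x y.
Proof. by rewrite /lt -Hle (inj_eq (can_inj K1)). Qed.

Lemma iso_cover x y : Defs.cover x y -> Defs.cover (phi x) (phi y).
Proof.
case/andP => h1 /forallP h2; apply/andP; split; first by rewrite iso_lt.
apply/forallP => z; rewrite -(K2 z) !iso_lt; exact: h2.
Qed.

Lemma iso_atom a : atom a -> atom (phi a).
Proof. by rewrite /atom -iso_bot; apply: iso_cover. Qed.

Lemma iso_rk x : rk (phi x) = rk x.
Proof.
case: (chain_exists H1 (le0 H1 x)) => s hs.
rewrite (rkE H1 R1 hs) -(size_map phi s); apply: (rkE H2 R2).
case/andP: hs => hp /eqP hl; apply/andP; split.
  rewrite -iso_bot; elim: s (bot T1) hp {hl} => [|a s IH] b //= /andP [hc hp].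
  by rewrite iso_cover //= IH.
by rewrite -iso_bot last_map hl.
Qed.

Lemma iso_top : phi (top T1) = top T2.
Proof.
apply: (leA H2); first exact: le_top.
by rewrite -(K2 (top T2)) -Hle le_top.
Qed.

Lemma iso_rkL : rkL T1 = rkL T2.
Proof. by rewrite /rkL -iso_top iso_rk. Qed.

Lemma iso_embedding : embedding phi.
Proof.
split; first exact: can_inj K1.
- by move=> x y; rewrite Hle.
- exact: iso_join.
- exact: iso_atom.
Qed.

End Iso.

Section IdExt.
Variable L : rawLat.
Hypothesis HL : geometric L.

Lemma id_modext : modext (fun x : car L => x).
Proof.
have HLl := geo_lat HL.
split => //.
- by split.
- move=> x; split; first by case=> A <-; apply: le_top.
  by move=> _; exists x.
- by move=> F; rewrite meetC // meet_idl ?le_top // join_idl ?le_top // addnC.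
Qed.

End IdExt.

Lemma swapw_adj (T : Type) (x0 : T) (a : seq T) x y b :
  swapw x0 (a ++ x :: y :: b) (size a) (size a).+1 = a ++ y :: x :: b.
Proof.
elim: a => [|c a IH] //=.
by rewrite /swapw /= in IH *; rewrite IH.
Qed.

Section Sign.
Variable L : rawLat.
Variable V : lmodType rat.
Variable f : diagram L -> V.
Hypothesis HR1 : forall (G : diagram L) (i j : nat), valid G ->
         i < size (dword G) -> j < size (dword G) -> i != j ->
         f G = (- f (dswap G i j))%R.
Variable E : rawLat.
Variable iota : car L -> car E.
Hypothesis Hm : modext iota.

Local Notation D w := (@Diagram L E iota w).

Lemma sign_adj a x y b : all (@atom E) (a ++ x :: y :: b) ->
  f (D (a ++ x :: y :: b)) = (- f (D (a ++ y :: x :: b)))%R.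
Proof.
move=> ha; rewrite (HR1 (i := size a) (j := (size a).+1)) //=.
- by rewrite /dswap /= swapw_adj.
- by rewrite size_cat /=; lia.
- by rewrite size_cat /=; lia.
- by rewrite neq_ltn ltnSn.
Qed.

Lemma sign_move a x t b : all (@atom E) (a ++ x :: t ++ b) ->
  f (D (a ++ x :: t ++ b)) = ((-1) ^+ size t *: f (D (a ++ t ++ x :: b)))%R.
Proof.
elim: t a => [|y t IH] a ha /=; first by rewrite expr0 scale1r.
rewrite sign_adj //.
have -> : a ++ y :: x :: t ++ b = (rcons a y) ++ x :: t ++ b by rewrite -cats1 -catA.
rewrite IH; last first.
  rewrite -cats1 -catA /=.
  by move: ha; rewrite !all_cat /= => /and3P [-> -> /andP [-> ->]].
rewrite -cats1 -catA /= exprS -scalerA scaleN1r.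
by [].
Qed.

Lemma sign_swap a s t : all (@atom E) (a ++ s ++ t) ->
  f (D (a ++ s ++ t)) = ((-1) ^+ (size s * size t) *: f (D (a ++ t ++ s)))%R.
Proof.
elim: s a => [|x s IH] a ha /=; first by rewrite mul0n expr0 scale1r cats0.
have -> : a ++ x :: s ++ t = (rcons a x) ++ s ++ t by rewrite -cats1 -catA.
rewrite IH; last by rewrite -cats1 -catA.
rewrite -cats1 -catA /= sign_move; last first.
  by move: ha; rewrite /= !all_cat /= !all_cat => /and3P [-> -> /andP [-> ->]].
by rewrite scalerA -exprD mulSn addnC.
Qed.

End Sign.

Import GRing.Theory.

Section Main.
Variable L : rawLat.
Hypothesis HL : geometric L.
Let HLl : is_lattice L. Proof. exact: geo_lat. Qed.

Lemma valid_dmul (G1 G2 : diagram L) : valid G1 -> valid G2 -> valid (dmul G1 G2).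
Proof.
case: G1 G2 => [E1 i1 w1] [E2 i2 w2] [M1 a1] [M2 a2]; split => /=.
  exact: (po_modext HL M1 M2).
rewrite all_cat (map_inj1 HL M1 M2 a1) (map_inj2 HL M1 M2 a2) !all_map.
apply/andP; split; apply/allP => H hH /=.
  by apply: (emb1_atom HL M1 M2); apply: (allP a1).
by apply: (emb2_atom HL M1 M2); apply: (allP a2).
Qed.

Lemma valid_dunit : valid (dunit L).
Proof. by split => //; apply: id_modext. Qed.

Lemma deg_dmul (G1 G2 : diagram L) : valid G1 -> valid G2 ->
  deg (dmul G1 G2) = (deg G1 + deg G2)%R.
Proof.
case: G1 G2 => [E1 i1 w1] [E2 i2 w2] [M1 a1] [M2 a2].
rewrite /deg /dmul /Fiota /=.
rewrite (map_inj1 HL M1 M2 a1) (map_inj2 HL M1 M2 a2).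
rewrite (bigjoin_cat (po_lattice HL M1 M2)) (emb1_bigjoin HL M1 M2) (emb2_bigjoin HL M1 M2).
have := deg_core HL M1 M2 (bigjoin w1) (bigjoin w2).
rewrite /Fi size_cat !size_map.
move: (rk (meet (join (emb1 i1 i2 (bigjoin w1)) (emb2 i1 i2 (bigjoin w2))) (po_iota i1 i2 (top L)))).
move: (rk (join (emb1 i1 i2 (bigjoin w1)) (emb2 i1 i2 (bigjoin w2)))).
move: (rk (meet (bigjoin w1) (i1 (top L)))) (rk (bigjoin w1)).
move: (rk (meet (bigjoin w2) (i2 (top L)))) (rk (bigjoin w2)).
move: (size w1) (size w2) => n1 n2 m1 m2 m3 m4 m5 m6 [h1 [h2 [h3 h4]]].
lia.
Qed.

Lemma deg_dunit : deg (dunit L) = 0%R.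
Proof.
have HrL : ranked L by case: HL.
rewrite /deg /Fiota /= (bigjoinE HLl) /= meet_idl ?le0 // (rk0 HLl HrL).
by [].
Qed.

Lemma sign_conv (n1 n2 : nat) (k1 k2 : int) :
  ((-1 : rat) ^ ((n1%:Z - 2 * k1) * (n2%:Z - 2 * k2)))%R = ((-1) ^+ (n1 * n2))%R.
Proof.
have -> : ((n1%:Z - 2 * k1) * (n2%:Z - 2 * k2) =
          (n1 * n2)%N%:Z + (2 * (2 * k1 * k2 - n1%:Z * k2 - n2%:Z * k1)))%R.
  by rewrite PoszM; lia.
rewrite expfzDr ?oppr_eq0 ?oner_eq0 // -exprz_exp.
have h2 : ((-1 : rat) ^ (2%:Z) = 1)%R by rewrite -exprnP sqrrN expr1n.
by rewrite h2 exp1rz mulr1 -exprnP.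
Qed.

Variable V : lmodType rat.
Variable f : diagram L -> V.
Hypothesis HR1 : forall (G : diagram L) (i j : nat), valid G ->
         i < size (dword G) -> j < size (dword G) -> i != j ->
         f G = (- f (dswap G i j))%R.
Hypothesis HR2 : forall (G G' : diagram L) (phi : car (dE G) -> car (dE G')),
         valid G -> valid G' -> embedding phi -> rkL (dE G) = rkL (dE G') ->
         (forall A, diota G' A = phi (diota G A)) ->
         dword G' = map phi (dword G) -> f G = f G'.

Lemma Aof_id (y : car L) : Aof (fun x : car L => x) y = y.
Proof. by apply: (Aof_eq (id_modext HL)); rewrite /Fi meet_idl // le_top. Qed.

Lemma unit_r (G : diagram L) : valid G -> f (dmul G (dunit L)) = f G.
Proof.
move=> hG; have hG' := valid_dmul hG valid_dunit.
case: G hG hG' => E i w [M aw] hG'.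
have Mid := id_modext HL.
have HE : is_lattice E by case: M => [[]].
have HrE : ranked E by case: M => [[]].
have HP := po_lattice HL M Mid.
have HrP : ranked (poLat i id) by case: (po_geometric HL M Mid).
have K1 : cancel (emb1 i id) (fun p => (val p).1).
  by move=> x; rewrite (emb1V HL M Mid).
have K2 : cancel (fun p => (val p).1) (emb1 i id).
  move=> p; apply: val_inj; rewrite (emb1V HL M Mid) (Acond HL M Mid p) Aof_id.
  by case: (val p).
have Hle : forall x y, le x y = le (emb1 i id x) (emb1 i id y).
  move=> x y; rewrite /= !(emb1V HL M Mid) /=.
  by case h: (le x y) => //=; rewrite (Aof_le HL M h).
symmetry; apply: (HR2 (G := Diagram E i w) (G' := dmul (Diagram E i w) (dunit L)) (phi := emb1 i id)) => //=.
- exact: (iso_embedding HE HP K1 K2 Hle).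
- exact: (iso_rkL HE HP HrE HrP K1 K2 Hle).
- by move=> A; apply: val_inj; rewrite (pioV HL M Mid) (emb1V HL M Mid) (Aof_i HL M).
- by rewrite cats0 (map_inj1 HL M Mid aw).
Qed.

Lemma comm (G1 G2 : diagram L) : valid G1 -> valid G2 ->
  f (dmul G1 G2) = ((-1 : rat) ^ (deg G1 * deg G2)%R *: f (dmul G2 G1))%R.
Proof.
move=> h1 h2; have h12 := valid_dmul h1 h2; have h21 := valid_dmul h2 h1.
case: G1 G2 h1 h2 h12 h21 => [E1 i1 w1] [E2 i2 w2] [M1 a1] [M2 a2] h12 h21.
have HP12 := po_lattice HL M1 M2; have HP21 := po_lattice HL M2 M1.
have HrP12 : ranked (poLat i1 i2) by case: (po_geometric HL M1 M2).
have HrP21 : ranked (poLat i2 i1) by case: (po_geometric HL M2 M1).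
pose sw (p : car (poLat i2 i1)) : car (poLat i1 i2) := pk i1 i2 (val p).2 (val p).1.
pose sw' (p : car (poLat i1 i2)) : car (poLat i2 i1) := pk i2 i1 (val p).2 (val p).1.
have swV : forall p, val (sw p) = ((val p).2, (val p).1).
  by move=> p; rewrite (pkV HL M1 M2) // (Acond HL M2 M1 p).
have swV' : forall p, val (sw' p) = ((val p).2, (val p).1).
  by move=> p; rewrite (pkV HL M2 M1) // (Acond HL M1 M2 p).
have K1 : cancel sw sw'.
  by move=> p; apply: val_inj; rewrite swV' swV /=; case: (val p).
have K2 : cancel sw' sw.
  by move=> p; apply: val_inj; rewrite swV swV' /=; case: (val p).
have Hle : forall x y, le x y = le (sw x) (sw y).
  by move=> x y; rewrite /= !swV /= andbC.
set W21 := map (po_inj1 i2 i1) w2 ++ map (po_inj2 i2 i1) w1.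
have e21 : map sw W21 = map (emb2 i1 i2) w2 ++ map (emb1 i1 i2) w1.
  rewrite /W21 (map_inj1 HL M2 M1 a2) (map_inj2 HL M2 M1 a1) map_cat -!map_comp.
  congr cat; apply: eq_map => x /=; apply: val_inj.
    by rewrite swV (emb1V HL M2 M1) (emb2V HL M1 M2).
  by rewrite swV (emb2V HL M2 M1) (emb1V HL M1 M2).
have hval : valid (Diagram (poLat i1 i2) (po_iota i1 i2) (map sw W21)).
  split; first exact: (po_modext HL M1 M2).
  rewrite all_map; apply/allP => x hx /=.
  apply: (iso_atom HP21 HP12 K1 K2 Hle).
  by case: h21 => _ /allP; apply.
have step1 : f (dmul (Diagram E2 i2 w2) (Diagram E1 i1 w1)) =
             f (Diagram (poLat i1 i2) (po_iota i1 i2) (map sw W21)).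
  apply: (HR2 (G := dmul (Diagram E2 i2 w2) (Diagram E1 i1 w1)) (G' := Diagram (poLat i1 i2) (po_iota i1 i2) (map sw W21)) (phi := sw)).
  - exact h21.
  - exact hval.
  - exact: (iso_embedding HP21 HP12 K1 K2 Hle).
  - exact: (iso_rkL HP21 HP12 HrP21 HrP12 K1 K2 Hle).
  - move=> A; change (po_iota i1 i2 A = sw (po_iota i2 i1 A)).
    by apply: val_inj; rewrite swV (pioV HL M1 M2) (pioV HL M2 M1).
  - by rewrite /W21.
rewrite step1 e21.
have haw : all (@atom (poLat i1 i2)) ([::] ++ map (emb1 i1 i2) w1 ++ map (emb2 i1 i2) w2).
  case: h12 => _; rewrite /= (map_inj1 HL M1 M2 a1) (map_inj2 HL M1 M2 a2) //.
have e12 : dmul (Diagram E1 i1 w1) (Diagram E2 i2 w2) =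
  Diagram (poLat i1 i2) (po_iota i1 i2) (map (emb1 i1 i2) w1 ++ map (emb2 i1 i2) w2).
  by rewrite /dmul /= (map_inj1 HL M1 M2 a1) (map_inj2 HL M1 M2 a2).
rewrite e12.
have := sign_swap HR1 (po_modext HL M1 M2) haw.
rewrite /= !size_map => ->.
congr (_ *: _)%R.
rewrite /deg /=.
by rewrite sign_conv.
Qed.


Lemma unit_l (G : diagram L) : valid G -> f (dmul (dunit L) G) = f G.
Proof.
move=> hG; rewrite (comm valid_dunit hG) deg_dunit mul0r expr0z scale1r.
exact: unit_r.
Qed.

End Main.


Import GRing.Theory.

Lemma Aof_pio (L E1 E2 : rawLat) (HL : geometric L) (i1 : car L -> car E1) (i2 : car L -> car E2)
  (M1 : modext i1) (M2 : modext i2) (p : car (poLat i1 i2)) :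
  Aof (po_iota i1 i2) p = Ap p.
Proof.
apply: (Aof_eq (po_modext HL M1 M2)).
by rewrite /Fi (meetC (po_lattice HL M1 M2)) (meet_Phi HL M1 M2).
Qed.

Section Assoc.
Variables L E1 E2 E3 : rawLat.
Hypothesis HL : geometric L.
Variables (i1 : car L -> car E1) (i2 : car L -> car E2) (i3 : car L -> car E3).
Hypotheses (M1 : modext i1) (M2 : modext i2) (M3 : modext i3).
Let M12 := po_modext HL M1 M2.
Let M23 := po_modext HL M2 M3.
Local Notation P12 := (poLat i1 i2).
Local Notation P23 := (poLat i2 i3).
Local Notation Pl := (poLat (po_iota i1 i2) i3).
Local Notation Pr := (poLat i1 (po_iota i2 i3)).

Definition phiA (q : car Pl) : car Pr :=
  pk i1 (po_iota i2 i3) (val (val q).1).1 (pk i2 i3 (val (val q).1).2 (val q).2).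
Definition psiA (p : car Pr) : car Pl :=
  pk (po_iota i1 i2) i3 (pk i1 i2 (val p).1 (val (val p).2).1) (val (val p).2).2.

Lemma cond23 (q : car Pl) : Aof i2 (val (val q).1).2 = Aof i3 (val q).2.
Proof.
by rewrite -(Acond HL M12 M3 q) (Aof_pio HL M1 M2) (Ap2 HL M1 M2).
Qed.

Lemma phiV2 (q : car Pl) : val (pk i2 i3 (val (val q).1).2 (val q).2) = ((val (val q).1).2, (val q).2).
Proof. by rewrite (pkV HL M2 M3) // cond23. Qed.

Lemma phiV (q : car Pl) : val (phiA q) = ((val (val q).1).1, pk i2 i3 (val (val q).1).2 (val q).2).
Proof.
rewrite /phiA (pkV HL M1 M23) // (Aof_pio HL M2 M3) /Ap phiV2 /=.
exact: (Acond HL M1 M2).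
Qed.

Lemma cond12 (p : car Pr) : Aof i1 (val p).1 = Aof i2 (val (val p).2).1.
Proof. by rewrite (Acond HL M1 M23 p) (Aof_pio HL M2 M3). Qed.

Lemma psiV1 (p : car Pr) : val (pk i1 i2 (val p).1 (val (val p).2).1) = ((val p).1, (val (val p).2).1).
Proof. by rewrite (pkV HL M1 M2) // cond12. Qed.

Lemma psiV (p : car Pr) : val (psiA p) = (pk i1 i2 (val p).1 (val (val p).2).1, (val (val p).2).2).
Proof.
rewrite /psiA (pkV HL M12 M3) // (Aof_pio HL M1 M2) /Ap psiV1 /= cond12.
exact: (Acond HL M2 M3).
Qed.

Lemma phiK : cancel phiA psiA.
Proof.
move=> q; apply: val_inj; rewrite psiV phiV /= phiV2 /=.
rewrite (pk_val HL M1 M2); by case: (val q).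
Qed.

Lemma psiK : cancel psiA phiA.
Proof.
move=> p; apply: val_inj; rewrite phiV psiV /= psiV1 /=.
rewrite (pk_val HL M2 M3); by case: (val p).
Qed.

Lemma phi_le x y : le x y = le (phiA x) (phiA y).
Proof. by rewrite /= !phiV /= !phiV2 /= andbA. Qed.

End Assoc.

Import GRing.Theory.

Section Assoc2.
Variables L E1 E2 E3 : rawLat.
Hypothesis HL : geometric L.
Variables (i1 : car L -> car E1) (i2 : car L -> car E2) (i3 : car L -> car E3).
Hypotheses (M1 : modext i1) (M2 : modext i2) (M3 : modext i3).
Let M12 := po_modext HL M1 M2.
Let M23 := po_modext HL M2 M3.

Lemma pk_pio a : pk i2 i3 (i2 a) (i3 a) = po_iota i2 i3 a.
Proof.
have c : Aof i2 (i2 a) = Aof i3 (i3 a) by rewrite (Aof_i HL M2) (Aof_i HL M3).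
by apply: val_inj; rewrite (pkV HL M2 M3 c).
Qed.

Lemma phi_a x : phiA (emb1 (po_iota i1 i2) i3 (emb1 i1 i2 x)) = emb1 i1 (po_iota i2 i3) x.
Proof.
apply: val_inj; rewrite (phiV HL M1 M2 M3) (emb1V HL M1 M23).
rewrite (emb1V HL M12 M3) /= (emb1V HL M1 M2) /= (Aof_pio HL M1 M2) (Ap_emb1 HL M1 M2).
by rewrite pk_pio.
Qed.

Lemma phi_b x : phiA (emb1 (po_iota i1 i2) i3 (emb2 i1 i2 x)) = emb2 i1 (po_iota i2 i3) (emb1 i2 i3 x).
Proof.
apply: val_inj; rewrite (phiV HL M1 M2 M3) (emb2V HL M1 M23).
rewrite (emb1V HL M12 M3) /= (emb2V HL M1 M2) /= (Aof_pio HL M1 M2) (Ap_emb2 HL M1 M2).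
by rewrite (Aof_pio HL M2 M3) (Ap_emb1 HL M2 M3).
Qed.

Lemma phi_c x : phiA (emb2 (po_iota i1 i2) i3 x) = emb2 i1 (po_iota i2 i3) (emb2 i2 i3 x).
Proof.
apply: val_inj; rewrite (phiV HL M1 M2 M3) (emb2V HL M1 M23).
rewrite (emb2V HL M12 M3) /= (pioV HL M1 M2) /=.
by rewrite (Aof_pio HL M2 M3) (Ap_emb2 HL M2 M3).
Qed.

Lemma phi_io A : po_iota i1 (po_iota i2 i3) A = phiA (po_iota (po_iota i1 i2) i3 A).
Proof.
apply: val_inj; rewrite (phiV HL M1 M2 M3) (pioV HL M1 M23).
rewrite (pioV HL M12 M3) /= (pioV HL M1 M2) /=.
by rewrite pk_pio.
Qed.

End Assoc2.

Lemma mf1 (A B C D : Type) (f : C -> D) (g : B -> C) (k : A -> B) (h : A -> D) s :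
  (forall x, f (g (k x)) = h x) -> map f (map g (map k s)) = map h s.
Proof. by move=> e; elim: s => //= x s ->; rewrite e. Qed.
Lemma mf2 (A B C D E : Type) (f : C -> D) (g : B -> C) (k : A -> B) (h : E -> D) (l : A -> E) s :
  (forall x, f (g (k x)) = h (l x)) -> map f (map g (map k s)) = map h (map l s).
Proof. by move=> e; elim: s => //= x s ->; rewrite e. Qed.
Lemma mf3 (A C D E : Type) (f : C -> D) (g : A -> C) (h : E -> D) (l : A -> E) s :
  (forall x, f (g x) = h (l x)) -> map f (map g s) = map h (map l s).
Proof. by move=> e; elim: s => //= x s ->; rewrite e. Qed.

Section AssocMain.
Variable L : rawLat.
Hypothesis HL : geometric L.
Variable V : lmodType rat.
Variable f : diagram L -> V.
Hypothesis HR2 : forall (G G' : diagram L) (phi : car (dE G) -> car (dE G')),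
         valid G -> valid G' -> embedding phi -> rkL (dE G) = rkL (dE G') ->
         (forall A, diota G' A = phi (diota G A)) ->
         dword G' = map phi (dword G) -> f G = f G'.

Lemma assoc (G1 G2 G3 : diagram L) : valid G1 -> valid G2 -> valid G3 ->
  f (dmul (dmul G1 G2) G3) = f (dmul G1 (dmul G2 G3)).
Proof.
move=> h1 h2 h3.
have hl := valid_dmul HL (valid_dmul HL h1 h2) h3.
have hr := valid_dmul HL h1 (valid_dmul HL h2 h3).
have h12 := valid_dmul HL h1 h2; have h23 := valid_dmul HL h2 h3.
case: G1 G2 G3 h1 h2 h3 hl hr h12 h23 => [E1 i1 w1] [E2 i2 w2] [E3 i3 w3] [M1 a1] [M2 a2] [M3 a3] hl hr h12 h23.
have M12 := po_modext HL M1 M2; have M23 := po_modext HL M2 M3.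
have HPl := po_lattice HL M12 M3; have HPr := po_lattice HL M1 M23.
have HrPl : ranked (poLat (po_iota i1 i2) i3) by case: (po_geometric HL M12 M3).
have HrPr : ranked (poLat i1 (po_iota i2 i3)) by case: (po_geometric HL M1 M23).
have K1 := phiK HL M1 M2 M3; have K2 := psiK HL M1 M2 M3.
have Hle := phi_le HL M1 M2 M3.
have a12 : all (@atom (poLat i1 i2)) (map (emb1 i1 i2) w1 ++ map (emb2 i1 i2) w2).
  by case: h12 => _; rewrite /= (map_inj1 HL M1 M2 a1) (map_inj2 HL M1 M2 a2).
have a23 : all (@atom (poLat i2 i3)) (map (emb1 i2 i3) w2 ++ map (emb2 i2 i3) w3).
  by case: h23 => _; rewrite /= (map_inj1 HL M2 M3 a2) (map_inj2 HL M2 M3 a3).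
have el : dword (dmul (dmul (Diagram E1 i1 w1) (Diagram E2 i2 w2)) (Diagram E3 i3 w3)) =
  map (emb1 (po_iota i1 i2) i3) (map (emb1 i1 i2) w1 ++ map (emb2 i1 i2) w2) ++
  map (emb2 (po_iota i1 i2) i3) w3.
  rewrite /dmul /= (map_inj1 HL M1 M2 a1) (map_inj2 HL M1 M2 a2).
  by rewrite (map_inj1 HL M12 M3 a12) (map_inj2 HL M12 M3 a3).
have er : dword (dmul (Diagram E1 i1 w1) (dmul (Diagram E2 i2 w2) (Diagram E3 i3 w3))) =
  map (emb1 i1 (po_iota i2 i3)) w1 ++
  map (emb2 i1 (po_iota i2 i3)) (map (emb1 i2 i3) w2 ++ map (emb2 i2 i3) w3).
  rewrite /dmul /= (map_inj1 HL M2 M3 a2) (map_inj2 HL M2 M3 a3).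
  by rewrite (map_inj1 HL M1 M23 a1) (map_inj2 HL M1 M23 a23).
apply: (HR2 (G := dmul (dmul (Diagram E1 i1 w1) (Diagram E2 i2 w2)) (Diagram E3 i3 w3))
            (G' := dmul (Diagram E1 i1 w1) (dmul (Diagram E2 i2 w2) (Diagram E3 i3 w3)))
            (phi := @phiA L E1 E2 E3 i1 i2 i3)).
- exact hl.
- exact hr.
- exact: (iso_embedding HPl HPr K1 K2 Hle).
- exact: (iso_rkL HPl HPr HrPl HrPr K1 K2 Hle).
- move=> A; change (po_iota i1 (po_iota i2 i3) A = phiA (po_iota (po_iota i1 i2) i3 A)).
  exact: (phi_io HL M1 M2 M3).
- rewrite el er !map_cat.
  rewrite (mf1 w1 (phi_a HL M1 M2 M3)) (mf2 w2 (phi_b HL M1 M2 M3)) (mf3 w3 (phi_c HL M1 M2 M3)).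
  by rewrite catA.
Qed.

End AssocMain.

Theorem lemma4 (L : rawLat) (HL : geometric L) (HnL : nontrivial L) :
  (forall G1 G2 : diagram L, valid G1 -> valid G2 ->
     deg (dmul G1 G2) = (deg G1 + deg G2)%R) /\
  (forall (V : lmodType rat) (f : diagram L -> V), respects f ->
     [/\ (forall G1 G2 G3 : diagram L, valid G1 -> valid G2 -> valid G3 ->
            f (dmul (dmul G1 G2) G3) = f (dmul G1 (dmul G2 G3))),
         (forall G1 G2 : diagram L, valid G1 -> valid G2 ->
            f (dmul G1 G2) = (((-1 : rat) ^ (deg G1 * deg G2)%R) *: f (dmul G2 G1))%R) &
         (forall G : diagram L, valid G ->
            f (dmul G (dunit L)) = f G /\ f (dmul (dunit L) G) = f G)]).
Proof.
split.
  by move=> G1 G2 h1 h2; apply: deg_dmul.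
move=> V f [R1 R2 R3 R4 R5]; split.
- by move=> G1 G2 G3 h1 h2 h3; apply: (assoc HL R2).
- by move=> G1 G2 h1 h2; apply: (comm HL R1 R2).
- move=> G hG; split; first exact: (unit_r HL R2).
  exact: (unit_l HL R1 R2).
Qed.
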